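(* Let $k\ge3$ and $d\in[d_{\mathrm{lbd}}(k),d_{\mathrm{ubd}}(k)]$. Then the equation $\Psi_d(x)=x$ has a unique root $x=x(k,d)$ in $[\frac12-\frac1{2^k},\frac12]$, so $\Phi^\star(d):=\Phi_k(d,x(k,d))$ is well defined. Furthermore, $d\mapsto \Phi^\star(d)$ is continuous on $[d_{\mathrm{lbd}}(k),d_{\mathrm{ubd}}(k)]$, with $\Phi^\star(d_{\mathrm{lbd}}(k))>0$ and $\Phi^\star(d_{\mathrm{ubd}}(k))<0$.
   Context: For real $d$ and $k\ge3$: $\hat\Psi(x)=\frac{1-2x^{k-1}}{1-x^{k-1}}$, $\dot\Psi(v)=\frac{1-v^{d-1}}{2-v^{d-1}}$, $\Psi_d=\dot\Psi\circ\hat\Psi$. $\Phi_k(d,x)=-\log(1-x)-d(1-k^{-1}-d^{-1})\log(1-2x^k)+(d-1)\log(1-x^{k-1})$. The constants: $d_{\mathrm{lbd}}(3)=6.74$, $d_{\mathrm{lbd}}(4)=16.7$, $d_{\mathrm{lbd}}(k)=(2^{k-1}-2)k\log2$ for $k\ge5$; $d_{\mathrm{ubd}}(3)=7.5$, $d_{\mathrm{ubd}}(k)=2^{k-1}k\log2$ for $k\ge4$. *)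

(* Defs.v *)
From Stdlib Require Import Reals.
Open Scope R_scope.

Definition Psi_hat (k : nat) (x : R) : R :=
  (1 - 2 * x ^ (k - 1)) / (1 - x ^ (k - 1)).

(* \dot\Psi(v) = (1 - v^{d-1}) / (2 - v^{d-1}),  real exponent d-1
   (v^{d-1} := exp((d-1) ln v), used for v > 0) *)
Definition Psi_dot (d v : R) : R :=
  (1 - Rpower v (d - 1)) / (2 - Rpower v (d - 1)).

Definition Psi (k : nat) (d x : R) : R := Psi_dot d (Psi_hat k x).

Definition Phi (k : nat) (d x : R) : R :=
  - ln (1 - x)
  - d * (1 - / INR k - / d) * ln (1 - 2 * x ^ k)
  + (d - 1) * ln (1 - x ^ (k - 1)).

Definition d_lbd (k : nat) : R :=
  match k with
  | 3%nat => 674 / 100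
  | 4%nat => 167 / 10
  | _ => (2 ^ (k - 1) - 2) * INR k * ln 2
  end.

Definition d_ubd (k : nat) : R :=
  match k with
  | 3%nat => 75 / 10
  | _ => 2 ^ (k - 1) * INR k * ln 2
  end.

Definition in_root_interval (k : nat) (x : R) : Prop :=
  1 / 2 - 1 / 2 ^ k <= x <= 1 / 2.

Definition in_d_interval (k : nat) (d : R) : Prop :=
  d_lbd k <= d <= d_ubd k.

(* Main.v *)
Require Import Defs.
From Stdlib Require Import Reals Lra Lia Psatz Ranalysis5.
From Coquelicot Require Import Coquelicot.
Open Scope R_scope.

Lemma mono_deriv (g dg : R -> R) (a b : R) : a <= b ->
  (forall x, a <= x <= b -> is_derive g x (dg x)) ->
  (forall x, a <= x <= b -> 0 <= dg x) -> g a <= g b.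
Proof.
  intros Hab Hd Hp.
  destruct (MVT_gen g a b dg) as [c [Hc Heq]].
  - intros x Hx. apply Hd. rewrite Rmin_left in Hx by lra. rewrite Rmax_right in Hx by lra. lra.
  - intros x Hx. rewrite Rmin_left in Hx by lra. rewrite Rmax_right in Hx by lra.
    apply derivable_continuous_pt. exists (dg x). apply is_derive_Reals. apply Hd. lra.
  - rewrite Rmin_left in Hc by lra. rewrite Rmax_right in Hc by lra.
    assert (0 <= dg c) by (apply Hp; lra). nra.
Qed.

Lemma ln_gt0_of (y : R) : 1 < y -> 0 < ln y.
Proof. intros; rewrite <- ln_1; apply ln_increasing; lra. Qed.

Lemma ln_le_sub1 (y : R) : 0 < y -> ln y <= y - 1.
Proof.
  intros Hy. destruct (Req_dec y 1) as [->|Hn]. rewrite ln_1; lra.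
  assert (H := exp_ineq1_le (ln y)). rewrite exp_ln in H; lra.
Qed.

Lemma ln_ge_1_inv (y : R) : 0 < y -> 1 - / y <= ln y.
Proof.
  intros Hy. assert (H := ln_le_sub1 (/ y) (Rinv_0_lt_compat _ Hy)).
  rewrite ln_Rinv in H by lra. lra.
Qed.

Definition lnlo (s : R) : R := 2 * (s + s^3/3 + s^5/5 + s^7/7).
Definition lnhi (s : R) : R := lnlo s + 2 * s^9 / (9 * (1 - s^2)).

Lemma lnser_lo (s : R) : 0 <= s < 1 -> lnlo s <= ln (1 + s) - ln (1 - s).
Proof.
  intros Hs.
  set (g := fun u => ln (1 + u) - ln (1 - u) - lnlo u).
  assert (g 0 <= g s).
  { apply (mono_deriv g (fun u => 2 * u^8 / (1 - u^2))). lra.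
    - intros u Hu. unfold g, lnlo.
      auto_derive. repeat split; lra.
      field. repeat split; try lra. nra.
    - intros u Hu. apply Rmult_le_pos. apply Rmult_le_pos. lra. apply pow_le; lra.
      apply Rlt_le, Rinv_0_lt_compat. nra. }
  unfold g in H. rewrite Rplus_0_r, Rminus_0_r, ln_1 in H. unfold lnlo in *. lra.
Qed.

Lemma lnser_hi (s : R) : 0 <= s < 1 -> ln (1 + s) - ln (1 - s) <= lnhi s.
Proof.
  intros Hs.
  set (g := fun u => lnhi u - (ln (1 + u) - ln (1 - u))).
  assert (g 0 <= g s).
  { apply (mono_deriv g (fun u => (4/9) * u^10 / (1 - u^2)^2)). lra.
    - intros u Hu. unfold g, lnhi, lnlo.
      auto_derive. repeat split; try lra. nra.
      field. repeat split; try lra. nra.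
    - intros u Hu. apply Rmult_le_pos. apply Rmult_le_pos. lra. apply pow_le; lra.
      apply Rlt_le, Rinv_0_lt_compat. apply pow_lt. nra. }
  unfold g, lnhi, lnlo in H. rewrite Rplus_0_r, Rminus_0_r, ln_1 in H. unfold lnhi, lnlo in *. lra.
Qed.

Lemma ln_bounds (y : R) : 1 <= y ->
  lnlo ((y-1)/(y+1)) <= ln y <= lnhi ((y-1)/(y+1)).
Proof.
  intros Hy. set (s := (y-1)/(y+1)).
  assert (Hs : 0 <= s < 1).
  { unfold s; split. apply Rdiv_le_0_compat; lra.
    apply (Rmult_lt_reg_r (y+1)). lra. unfold Rdiv; rewrite Rmult_assoc, Rinv_l; lra. }
  assert (E : ln y = ln (1 + s) - ln (1 - s)).
  { replace y with ((1+s) * /(1-s)) at 1.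
    rewrite ln_mult, ln_Rinv; try lra. apply Rinv_0_lt_compat; lra.
    unfold s. field. split; lra. }
  rewrite E. split; [apply lnser_lo | apply lnser_hi]; auto.
Qed.

Lemma ln1m_le (a : R) : 0 <= a < 1 -> ln (1 - a) <= - a - a^2/2.
Proof.
  intros Ha.
  set (g := fun u => - u - u^2/2 - ln (1 - u)).
  assert (g 0 <= g a).
  { apply (mono_deriv g (fun u => u^2 / (1 - u))). lra.
    - intros u Hu. unfold g. auto_derive. lra. field. lra.
    - intros u Hu. apply Rmult_le_pos. apply pow_le; lra.
      apply Rlt_le, Rinv_0_lt_compat. lra. }
  unfold g in H. rewrite Rminus_0_r, ln_1 in H. lra.
Qed.

Lemma ln1m_ge (a : R) : 0 <= a < 1 -> - a - a^2/2 - a^3/(3*(1-a)) <= ln (1 - a).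
Proof.
  intros Ha.
  set (g := fun u => ln (1 - u) + u + u^2/2 + u^3/(3*(1-u))).
  assert (g 0 <= g a).
  { apply (mono_deriv g (fun u => u^3 / (3*(1 - u)^2))). lra.
    - intros u Hu. unfold g. auto_derive. lra. field. lra.
    - intros u Hu. apply Rmult_le_pos. apply pow_le; lra.
      apply Rlt_le, Rinv_0_lt_compat. nra. }
  unfold g in H. rewrite Rminus_0_r, ln_1 in H. lra.
Qed.

Lemma exp_ge_poly4 (z : R) : 0 <= z -> 1 + z + z^2/2 + z^3/6 + z^4/24 <= exp z.
Proof.
  intros Hz.
  set (g := fun u => exp u - (1 + u + u^2/2 + u^3/6 + u^4/24)).
  assert (H1 : forall u, 0 <= u -> 0 <= exp u - (1 + u + u^2/2 + u^3/6)).
  { intros u Hu.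
    set (h := fun u => exp u - (1 + u + u^2/2 + u^3/6)).
    assert (h 0 <= h u).
    { apply (mono_deriv h (fun u => exp u - (1 + u + u^2/2))). lra.
      - intros x Hx. unfold h. auto_derive. auto. field.
      - intros x Hx.
        set (h2 := fun u => exp u - (1 + u + u^2/2)).
        assert (h2 0 <= h2 x).
        { apply (mono_deriv h2 (fun u => exp u - (1 + u))). lra.
          - intros y Hy. unfold h2. auto_derive. auto. field.
          - intros y Hy. assert (H := exp_ineq1_le y). lra. }
        unfold h2 in H. rewrite exp_0 in H. lra. }
    unfold h in H. rewrite exp_0 in H. lra. }
  assert (g 0 <= g z).
  { apply (mono_deriv g (fun u => exp u - (1 + u + u^2/2 + u^3/6))). lra.
    - intros x Hx. unfold g. auto_derive. auto. field.
    - intros x Hx. apply H1; lra. }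
  unfold g in H. rewrite exp_0 in H. lra.
Qed.

Lemma bern_lo (z : R) (n : nat) : 0 <= z <= 1 -> 1 - INR n * z <= (1 - z)^n.
Proof.
  intros Hz. induction n as [|n IH]. simpl; lra.
  rewrite S_INR. simpl.
  assert (0 <= (1-z)^n) by (apply pow_le; lra).
  assert (0 <= INR n) by apply pos_INR. nra.
Qed.

Lemma bern_hi (z : R) (n : nat) : 0 <= z <= 1 ->
  (1 - z)^n <= 1 - INR n * z + INR n * (INR n - 1) / 2 * z^2.
Proof.
  intros Hz. induction n as [|n IH]. simpl; lra.
  rewrite S_INR. simpl.
  assert (0 <= INR n) by apply pos_INR.
  assert (Hq : (1-z) * (1 - INR n * z + INR n * (INR n - 1) / 2 * z^2)
     <= 1 - (INR n + 1) * z + (INR n + 1) * (INR n + 1 - 1) / 2 * (z * (z * 1))).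
  { assert (0 <= INR n * (INR n - 1) / 2 * z^3 + 0) .
    { destruct n. simpl. lra. rewrite S_INR. assert (0 <= INR n) by apply pos_INR.
      apply Rplus_le_le_0_compat; [|lra]. apply Rmult_le_pos. 
      apply Rmult_le_pos; [|lra]. apply Rmult_le_pos; lra. apply pow_le; lra. }
    simpl in *. nra. }
  eapply Rle_trans; [|exact Hq]. apply Rmult_le_compat_l. lra. exact IH.
Qed.

Lemma pow_diff_le (x y : R) (n : nat) : 0 <= x <= y ->
  y^(S n) - x^(S n) <= INR (S n) * y^n * (y - x).
Proof.
  intros Hxy. induction n as [|n IH]. simpl; lra.
  rewrite S_INR.
  replace (y ^ S (S n) - x ^ S (S n)) with (y * (y^(S n) - x^(S n)) + x^(S n) * (y - x)) by (simpl; ring).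
  assert (x^(S n) <= y^(S n)) by (apply pow_incr; lra).
  assert (0 <= y - x) by lra. assert (0 <= y) by lra.
  assert (y * (y ^ S n - x ^ S n) <= y * (INR (S n) * y ^ n * (y - x))) by (apply Rmult_le_compat_l; lra).
  replace (y ^ S n) with (y * y^n) in * by (simpl; ring).
  replace (x ^ S n) with (x * x^n) in * by (simpl; ring).
  nra.
Qed.

Lemma pow_diff_ge (x y : R) (n : nat) : 0 <= x <= y ->
  INR (S n) * x^n * (y - x) <= y^(S n) - x^(S n).
Proof.
  intros Hxy. induction n as [|n IH]. simpl; lra.
  rewrite S_INR.
  replace (y ^ S (S n) - x ^ S (S n)) with (x * (y^(S n) - x^(S n)) + y^(S n) * (y - x)) by (simpl; ring).
  assert (x^(S n) <= y^(S n)) by (apply pow_incr; lra).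
  assert (0 <= y - x) by lra. assert (0 <= x) by lra.
  assert (x * (INR (S n) * x ^ n * (y - x)) <= x * (y ^ S n - x ^ S n)) by (apply Rmult_le_compat_l; lra).
  replace (y ^ S n) with (y * y^n) in * by (simpl; ring).
  replace (x ^ S n) with (x * x^n) in * by (simpl; ring).
  nra.
Qed.

Lemma pow_le1 (x : R) (n : nat) : 0 <= x <= 1 -> x^n <= 1.
Proof.
  intros Hx. induction n as [|n IH]. simpl; lra.
  simpl. assert (0 <= x^n) by (apply pow_le; lra). nra.
Qed.

Lemma exp_mono_le (x y : R) : x <= y -> exp x <= exp y.
Proof. intros H. destruct (Req_dec x y) as [->|]. lra. left. apply exp_increasing. lra. Qed.

Definition aa (k : nat) : R := 1/2 - 1/2^k.

Lemma pow_half_le (n : nat) : (1 <= n)%nat -> (1/2)^n <= 1/2.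
Proof.
  intros Hn. destruct n. lia. simpl.
  assert ((1/2)^n <= 1) by (apply pow_le1; lra).
  assert (0 <= (1/2)^n) by (apply pow_le; lra). nra.
Qed.

Lemma aa_bounds (k : nat) : (3 <= k)%nat -> 3/8 <= aa k < 1/2.
Proof.
  intros Hk. unfold aa.
  assert (0 < 2^k) by (apply pow_lt; lra).
  assert (8 <= 2^k).
  { replace k with (3 + (k-3))%nat by lia. rewrite pow_add.
    assert (1 <= 2^(k-3)) by (apply pow_R1_Rle; lra). simpl. nra. }
  split. apply Rle_trans with (1/2 - 1/8). lra.
  apply Rplus_le_compat_l, Ropp_le_contravar.
  unfold Rdiv. rewrite !Rmult_1_l. apply Rinv_le_contravar; lra.
  assert (0 < 1/2^k) by (apply Rdiv_lt_0_compat; lra). lra.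
Qed.

Lemma t_bounds (k : nat) (x : R) : (3 <= k)%nat -> 0 < x <= 1/2 ->
  0 < x^(k-1) <= 1/4.
Proof.
  intros Hk Hx. split. apply pow_lt; lra.
  replace (k-1)%nat with (2 + (k-3))%nat by lia. rewrite pow_add.
  assert (x^(k-3) <= 1) by (apply pow_le1; lra).
  assert (0 <= x^(k-3)) by (apply pow_le; lra).
  simpl. assert (x*(x*1) <= 1/4) by nra. nra.
Qed.

Lemma v_bounds (k : nat) (x : R) : (3 <= k)%nat -> 0 < x <= 1/2 ->
  0 < Psi_hat k x < 1.
Proof.
  intros Hk Hx. pose proof (t_bounds k x Hk Hx). unfold Psi_hat.
  split. apply Rdiv_lt_0_compat; lra.
  apply (Rmult_lt_reg_r (1 - x^(k-1))). lra.
  unfold Rdiv. rewrite Rmult_assoc, Rinv_l; lra.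
Qed.

Lemma lnv_neg (k : nat) (x : R) : (3 <= k)%nat -> 0 < x <= 1/2 -> ln (Psi_hat k x) < 0.
Proof.
  intros Hk Hx. pose proof (v_bounds k x Hk Hx). rewrite <- ln_1. apply ln_increasing; lra.
Qed.

Definition Wf (k : nat) (d x : R) : R := Rpower (Psi_hat k x) (d - 1).

Lemma W_pos k d x : 0 < Wf k d x.
Proof. unfold Wf, Rpower. apply exp_pos. Qed.

Lemma W_le1 k d x : (3 <= k)%nat -> 0 < x <= 1/2 -> 1 <= d -> Wf k d x <= 1.
Proof.
  intros Hk Hx Hd. unfold Wf, Rpower. rewrite <- exp_0 at 2.
  pose proof (lnv_neg k x Hk Hx). apply exp_mono_le. nra.
Qed.

Lemma Psi_eq k d x : Psi k d x = (1 - Wf k d x) / (2 - Wf k d x).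
Proof. reflexivity. Qed.

Lemma W_mono_d k d1 d2 x : (3 <= k)%nat -> 0 < x <= 1/2 -> d1 <= d2 ->
  Wf k d2 x <= Wf k d1 x.
Proof.
  intros Hk Hx Hd. unfold Wf, Rpower. pose proof (lnv_neg k x Hk Hx).
  apply exp_mono_le. nra.
Qed.

Lemma Psi_anti_W (w1 w2 : R) : w1 <= w2 -> w2 < 2 -> (1 - w2)/(2 - w2) <= (1 - w1)/(2 - w1).
Proof.
  intros H1 H2.
  replace ((1 - w2)/(2 - w2)) with (1 - /(2-w2)) by (field; lra).
  replace ((1 - w1)/(2 - w1)) with (1 - /(2-w1)) by (field; lra).
  assert (/(2-w1) <= /(2-w2)) by (apply Rinv_le_contravar; lra). lra.
Qed.

Lemma Psi_mono_d k d1 d2 x : (3 <= k)%nat -> 0 < x <= 1/2 -> 1 <= d1 -> d1 <= d2 ->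
  Psi k d1 x <= Psi k d2 x.
Proof.
  intros. rewrite !Psi_eq. apply Psi_anti_W. apply W_mono_d; auto.
  pose proof (W_le1 k d1 x H H0 H1). lra.
Qed.

Lemma Psi_half_lt k d : (3 <= k)%nat -> 1 <= d -> Psi k d (1/2) < 1/2.
Proof.
  intros Hk Hd. rewrite Psi_eq.
  pose proof (W_pos k d (1/2)). pose proof (W_le1 k d (1/2) Hk ltac:(lra) Hd).
  apply (Rmult_lt_reg_r (2 - Wf k d (1/2))). lra.
  unfold Rdiv. rewrite Rmult_assoc, Rinv_l; lra.
Qed.

Lemma Psi_gt_crit k d x y : (3 <= k)%nat -> 0 < x <= 1/2 -> 1 <= d -> y < 1 ->
  Wf k d x * (1 - y) < 1 - 2 * y -> y < Psi k d x.
Proof.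
  intros Hk Hx Hd Hy H. rewrite Psi_eq.
  pose proof (W_le1 k d x Hk Hx Hd).
  apply (Rmult_lt_reg_r (2 - Wf k d x)). lra.
  unfold Rdiv. rewrite Rmult_assoc, Rinv_l; lra.
Qed.

Lemma Psi_ge_crit k d x y : (3 <= k)%nat -> 0 < x <= 1/2 -> 1 <= d -> y < 1 ->
  Wf k d x * (1 - y) <= 1 - 2 * y -> y <= Psi k d x.
Proof.
  intros Hk Hx Hd Hy H. rewrite Psi_eq.
  pose proof (W_le1 k d x Hk Hx Hd).
  apply (Rmult_le_reg_r (2 - Wf k d x)). lra.
  unfold Rdiv. rewrite Rmult_assoc, Rinv_l; lra.
Qed.

Lemma cont_of_ex_derive (f : R -> R) x : ex_derive f x -> continuity_pt f x.
Proof. intros [l H]. apply derivable_continuous_pt. exists l. apply is_derive_Reals. exact H. Qed.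

Lemma cont_Psi_x k d x : (3 <= k)%nat -> 0 < x <= 1/2 -> 1 <= d ->
  continuity_pt (fun y => Psi k d y) x.
Proof.
  intros Hk Hx Hd. apply cont_of_ex_derive.
  pose proof (t_bounds k x Hk Hx). pose proof (v_bounds k x Hk Hx).
  pose proof (W_le1 k d x Hk Hx Hd).
  unfold Psi, Psi_dot, Psi_hat, Rpower. unfold Wf, Rpower, Psi_hat in H1.
  auto_derive. all: unfold Psi_hat, Rminus, Rdiv in *. repeat split; lra.
Qed.

Lemma cont_Psi_d k d x : (3 <= k)%nat -> 0 < x <= 1/2 -> 1 <= d ->
  continuity_pt (fun e => Psi k e x) d.
Proof.
  intros Hk Hx Hd. apply cont_of_ex_derive.
  pose proof (t_bounds k x Hk Hx). pose proof (v_bounds k x Hk Hx).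
  pose proof (W_le1 k d x Hk Hx Hd).
  unfold Psi, Psi_dot, Psi_hat, Rpower. unfold Wf, Rpower, Psi_hat in H1.
  auto_derive. all: unfold Psi_hat, Rminus, Rdiv in *. repeat split; lra.
Qed.

Definition PP (k : nat) (x : R) : R :=
  - ln (1 - x) + ln (1 - 2 * x^k) - ln (1 - x^(k-1)).
Definition QQ (k : nat) (x : R) : R :=
  - (1 - / INR k) * ln (1 - 2 * x^k) + ln (1 - x^(k-1)).

Lemma Phi_PQ k d x : (3 <= k)%nat -> d <> 0 -> Phi k d x = PP k x + d * QQ k x.
Proof. intros Hk Hd. assert (INR k <> 0) by (apply not_0_INR; lia).
  unfold Phi, PP, QQ. field. auto. Qed.

Lemma xk_bound k x : (3 <= k)%nat -> 0 < x <= 1/2 -> 0 < x^k <= 1/8.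
Proof.
  intros Hk Hx. pose proof (t_bounds k x Hk Hx).
  replace k with (S (k-1)) by lia. simpl. replace (S (k-1) - 1)%nat with (k-1)%nat in H by lia.
  split; nra.
Qed.

Lemma cont_PP k x : (3 <= k)%nat -> 0 < x <= 1/2 -> continuity_pt (PP k) x.
Proof.
  intros Hk Hx. apply cont_of_ex_derive.
  pose proof (t_bounds k x Hk Hx). pose proof (xk_bound k x Hk Hx).
  unfold PP. auto_derive. repeat split; lra.
Qed.

Lemma cont_QQ k x : (3 <= k)%nat -> 0 < x <= 1/2 -> continuity_pt (QQ k) x.
Proof.
  intros Hk Hx. apply cont_of_ex_derive.
  pose proof (t_bounds k x Hk Hx). pose proof (xk_bound k x Hk Hx).
  unfold QQ. auto_derive. repeat split; lra.
Qed.

Lemma cont_eps (f : R -> R) x0 : continuity_pt f x0 ->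
  forall eps, 0 < eps -> exists del, 0 < del /\
    forall x, Rabs (x - x0) < del -> Rabs (f x - f x0) < eps.
Proof.
  intros H eps He. destruct (H eps He) as [a [Ha Hx]].
  exists a. split. lra. intros x Hxa.
  destruct (Req_dec x x0) as [->|Hn].
  - rewrite Rminus_diag, Rabs_R0. lra.
  - apply Hx. split. split. exact I. auto. simpl. unfold Rdist. exact Hxa.
Qed.

Lemma ln2_bounds : 0.693147 < ln 2 < 0.6931472.
Proof.
  assert (E : ln 2 = ln (4/3) + ln (3/2)).
  { rewrite <- ln_mult by lra. replace (4/3*(3/2)) with 2 by field. reflexivity. }
  pose proof (ln_bounds (4/3) ltac:(lra)). pose proof (ln_bounds (3/2) ltac:(lra)).
  unfold lnhi, lnlo in *. rewrite E. split; lra.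
Qed.

Lemma dec_core k d x y : (3 <= k)%nat -> 1 <= d -> 0 < x -> x < y -> y <= 1/2 ->
  Psi k d y - Psi k d x <=
  (d-1) * Wf k d x * (y^(k-1) - x^(k-1)) /
     ((1 - x^(k-1)) * (1 - y^(k-1)) * Psi_hat k y * ((2 - Wf k d x) * (2 - Wf k d y))).
Proof.
  intros Hk Hd Hx Hxy Hy.
  pose proof (t_bounds k x Hk ltac:(lra)) as Htx. pose proof (t_bounds k y Hk ltac:(lra)) as Hty.
  pose proof (v_bounds k x Hk ltac:(lra)) as Hvx. pose proof (v_bounds k y Hk ltac:(lra)) as Hvy.
  pose proof (W_le1 k d x Hk ltac:(lra) Hd). pose proof (W_le1 k d y Hk ltac:(lra) Hd).
  pose proof (W_pos k d x). pose proof (W_pos k d y).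
  set (tx := x^(k-1)) in *. set (ty := y^(k-1)) in *.
  set (wx := Wf k d x) in *. set (wy := Wf k d y) in *.
  set (vx := Psi_hat k x) in *. set (vy := Psi_hat k y) in *.
  assert (Hw : wy >= wx * (1 + (d-1) * (ln vy - ln vx))).
  { unfold wy, wx, Wf, Rpower. fold vx vy.
    replace ((d-1) * ln vy) with ((d-1) * ln vx + (d-1) * (ln vy - ln vx)) by ring.
    rewrite exp_plus. pose proof (exp_ineq1_le ((d-1) * (ln vy - ln vx))).
    pose proof (exp_pos ((d-1) * ln vx)). nra. }
  assert (Hl : ln vx - ln vy <= (vx - vy) / vy).
  { replace (ln vx - ln vy) with (ln (vx / vy)).
    pose proof (ln_le_sub1 (vx/vy) ltac:(apply Rdiv_lt_0_compat; lra)).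
    replace ((vx - vy)/vy) with (vx/vy - 1) by (field; lra). lra.
    unfold Rdiv. rewrite ln_mult, ln_Rinv; try lra. apply Rinv_0_lt_compat; lra. }
  assert (Hv : vx - vy = (ty - tx) / ((1 - tx) * (1 - ty))).
  { unfold vx, vy, Psi_hat. fold tx ty. field. split; lra. }
  assert (HP : Psi k d y - Psi k d x = (wx - wy) / ((2 - wx) * (2 - wy))).
  { rewrite !Psi_eq. fold wx wy. field. split; lra. }
  rewrite HP.
  assert (Hwd : wx - wy <= (d-1) * wx * ((ty - tx) / ((1 - tx) * (1 - ty))) / vy).
  { rewrite <- Hv. assert (0 <= (d-1) * wx) by nra.
    assert ((d-1)*wx*(ln vx - ln vy) <= (d-1)*wx*((vx-vy)/vy)) by (apply Rmult_le_compat_l; lra).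
    replace ((d - 1) * wx * (vx - vy) / vy) with ((d-1)*wx*((vx-vy)/vy)) by (field; lra).
    nra. }
  assert (Hden : 0 < (2 - wx) * (2 - wy)) by nra.
  apply Rle_trans with (((d-1) * wx * ((ty - tx) / ((1 - tx) * (1 - ty))) / vy) / ((2 - wx) * (2 - wy))).
  apply Rmult_le_compat_r. left; apply Rinv_0_lt_compat; lra. exact Hwd.
  right. field. repeat split; lra.
Qed.

Lemma alg5 (e K L c p : R) :
  0 < e <= 1/64 -> 6 <= K -> K * e <= 3/32 -> K * K * e <= 9/16 ->
  0.693 < L < 0.6932 -> 0 <= c <= 1 -> 1 - (K-1) * (2*c*e) <= p <= 1 ->
  L - 2*c*e/(1+2*c*e)
  + ((K-1)*L/(2*e) - 1) * ((1-2*c*e)*(2*e*p) + ((1-2*c*e)*(2*e*p))^2/2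
                         + ((1-2*c*e)*(2*e*p))^3/(3*(1-(1-2*c*e)*(2*e*p))))
  + (K*L/(2*e) - 1) * (-(2*e*p) - (2*e*p)^2/2) < 0.
Proof.
  intros He HK Hu Hq HL Hc Hp.
  assert (Hce : 0 <= c*e <= e) by nra.
  assert (HKe : (K-1)*(2*c*e) <= 3/16) by nra.
  assert (Hp0 : 13/16 <= p) by lra.
  set (t := 2*e*p). set (u := (1-2*c*e)*t).
  assert (Ht : 0 < t <= 2*e) by (unfold t; nra).
  assert (Hut : 0 <= u <= t) by (unfold u; nra).
  set (D' := (K-1)*L/(2*e) - 1). set (d := K*L/(2*e)).
  assert (HD'1 : (K-1)*L/(2*e) >= 32*5*0.693).
  { assert (32 <= 1/(2*e)). { apply (Rmult_le_reg_r (2*e)). lra. field_simplify; lra. }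
    replace ((K-1)*L/(2*e)) with ((K-1)*L*(1/(2*e))) by (field; lra).
    assert (5 * 0.693 <= (K-1)*L) by nra. nra. }
  assert (HD' : 0 <= D') by (unfold D'; lra).
  assert (I1 : D' * u - (d-1) * t = - L * p - 2*c*e*((K-1)*L*p - 2*e*p)).
  { unfold D', d, u, t. field. lra. }
  assert (I2 : D' * (u^2/2) - (d-1) * (t^2/2) <= - L * p^2 * e).
  { assert (D' * u^2 <= D' * t^2) by (apply Rmult_le_compat_l; nra).
    assert (E : D' * (t^2/2) - (d-1)*(t^2/2) = - L * p^2 * e) by (unfold D', d, t; field; lra).
    lra. }
  assert (I3 : D' * (u^3/(3*(1-u))) <= 4*K*L*e^2/(3*(1-2*e))).
  { assert (D' <= K*L/(2*e)) by (unfold D'; assert (0 <= L/(2*e)) by (apply Rdiv_le_0_compat; lra);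
       replace ((K-1)*L/(2*e)) with (K*L/(2*e) - L/(2*e)) by (field; lra); lra).
    assert (u^3 <= (2*e)^3) by (apply pow_incr; lra).
    assert (0 < 1 - u) by lra.
    assert (u^3/(3*(1-u)) <= (2*e)^3/(3*(1-2*e))).
    { apply Rle_trans with ((2*e)^3/(3*(1-u))).
      apply Rmult_le_compat_r. left; apply Rinv_0_lt_compat; lra. auto.
      apply Rmult_le_compat_l. nra. apply Rinv_le_contravar; lra. }
    assert (0 <= u^3/(3*(1-u))) by (apply Rdiv_le_0_compat; [apply pow_le|]; lra).
    apply Rle_trans with (K*L/(2*e) * ((2*e)^3/(3*(1-2*e)))).
    apply Rmult_le_compat; lra.
    right. field. lra. }
  assert (I4 : L * (1 - p) - 2*c*e*(K-1)*L*p <= 4*(K-1)^2*c^2*e^2*L).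
  { assert (0 <= 1 - p) by lra.
    assert (L * ((1-p) - 2*c*e*(K-1)*p) <= L * (2*(K-1)*c*e*(1-p))).
    { apply Rmult_le_compat_l. lra. nra. }
    assert (2*(K-1)*c*e*(1-p) <= 2*(K-1)*c*e*(2*(K-1)*c*e)).
    { apply Rmult_le_compat_l. nra. lra. }
    nra. }
  assert (F1 : 4*(K-1)^2*c^2*e^2*L <= 1.5597 * c * e).
  { assert ((K-1)^2 * e <= 9/16) by nra.
    assert (c^2 <= c) by nra.
    assert (4*(K-1)^2*c^2*e^2*L = 4 * ((K-1)^2 * e) * (c^2) * e * L) by ring.
    assert (0 <= (K-1)^2*e) by (apply Rmult_le_pos; [apply pow2_ge_0 | lra]).
    assert (4 * ((K-1)^2 * e) * c^2 <= 4 * (9/16) * c) by nra.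
    assert (0 <= e * L) by nra.
    assert (4 * ((K-1)^2 * e) * c^2 * (e * L) <= 4 * (9/16) * c * (e * 0.6932)).
    { apply Rmult_le_compat; nra. }
    nra. }
  assert (F2 : (64/33) * c * e <= 2*c*e/(1+2*c*e)).
  { apply (Rmult_le_reg_r (1 + 2*c*e)). nra. field_simplify; nra. }
  assert (F3 : 4*c*e^2*p <= c*e/16).
  { assert (e*p <= 1/64) by nra. assert (0<=c*e) by nra.
    replace (4*c*e^2*p) with (4*(c*e)*(e*p)) by ring. nra. }
  assert (F4 : 0.66 * e * 0.693 <= L * p^2 * e).
  { assert (0.66 <= p^2) by nra. assert (0.693*0.66 <= L*p^2) by (apply Rmult_le_compat; lra).
    nra. }
  assert (F5 : 4*K*L*e^2/(3*(1-2*e)) <= 0.0895 * e).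
  { apply (Rmult_le_reg_r (3*(1-2*e))). lra. field_simplify; try lra.
    assert (K*e*L <= 3/32 * 0.6932) by nra. nra. }
  replace (L - 2*c*e/(1+2*c*e) + D' * (u + u^2/2 + u^3/(3*(1-u))) + (d-1) * (- t - t^2/2))
    with (L - 2*c*e/(1+2*c*e) + (D'*u - (d-1)*t) + (D'*(u^2/2) - (d-1)*(t^2/2)) + D'*(u^3/(3*(1-u)))) by ring.
  rewrite I1. nra.
Qed.

Lemma alg4 (e K L c p : R) :
  0 < e <= 1/64 -> 6 <= K -> K * e <= 3/32 -> K * K * e <= 9/16 ->
  0.693 < L < 0.6932 -> 0 <= c <= 1/2 ->
  1 - (K-1) * (2*c*e) <= p <= 1 - (K-1) * (2*c*e) + (K-1)*(K-2)/2 * (2*c*e)^2 -> p <= 1 ->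
  0 < L - 2*c*e
  + ((1/(2*e) - 2)*K*L * (1 - / K) - 1) * ((1-2*c*e)*(2*e*p) + ((1-2*c*e)*(2*e*p))^2/2)
  + ((1/(2*e) - 2)*K*L - 1) * (-(2*e*p) - (2*e*p)^2/2 - (2*e*p)^3/(3*(1-2*e*p))).
Proof.
  intros He HK Hu Hq HL Hc [Hp1 Hp2] Hp3.
  assert (Hce : 0 <= c*e <= e/2) by nra.
  set (A := (K-1)*(2*c*e)) in Hp1, Hp2.
  assert (HA : 0 <= A <= 3/32) by (unfold A; nra).
  assert (Hp0 : 29/32 <= p) by lra.
  set (lam := (1/(2*e) - 2)*L).
  assert (H32 : 32 <= 1/(2*e)). { apply (Rmult_le_reg_r (2*e)). lra. field_simplify; lra. }
  assert (Hlam : 20 <= lam) by (unfold lam; nra).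
  set (D' := (1/(2*e) - 2)*K*L * (1 - / K) - 1).
  assert (ED : D' = (K-1)*lam - 1) by (unfold D', lam; field; lra).
  set (d := (1/(2*e) - 2)*K*L).
  assert (Ed : d = K * lam) by (unfold d, lam; ring).
  assert (HD' : 0 <= D') by (rewrite ED; nra).
  set (t := 2*e*p). set (u := (1-2*c*e)*t).
  assert (Ht : 0 < t <= 2*e) by (unfold t; nra).
  assert (I1 : D' * u - (d-1) * t = - lam * t - 2*c*e*D'*t).
  { unfold u. rewrite ED, Ed. ring. }
  assert (I2 : D' * (u^2/2) - (d-1) * (t^2/2) >= (t^2/2) * (- 4*c*e*D' - lam)).
  { assert (u^2 >= (1 - 4*c*e) * t^2) by (unfold u; nra).
    assert (D' * u^2 >= D' * ((1 - 4*c*e) * t^2)) by (apply Rle_ge, Rmult_le_compat_l; lra).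
    rewrite Ed. rewrite ED in H0 |- *. nra. }
  assert (Elt : lam * t = p * L * (1 - 4*e)) by (unfold lam, t; field; lra).
  assert (HD'le : D' <= (K-1)*L/(2*e)).
  { rewrite ED. assert (lam <= L/(2*e)) by (unfold lam; replace ((1/(2*e) - 2)*L) with (L/(2*e) - 2*L) by (field; lra); lra).
    replace ((K-1)*L/(2*e)) with ((K-1)*(L/(2*e))) by (field; lra). nra. }
  assert (HD't : D' * t <= (K-1)*L*p).
  { apply Rle_trans with ((K-1)*L/(2*e) * t). apply Rmult_le_compat_r; lra.
    right. unfold t. field. lra. }
  assert (T2a : (t^2/2) * lam <= e * p^2 * L).
  { unfold lam, t. replace ((2*e*p)^2/2 * ((1/(2*e) - 2)*L)) with (e*p^2*L - 4*e^2*p^2*L) by (field; lra).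
    assert (0 <= e^2*p^2*L) by (apply Rmult_le_pos; [apply Rmult_le_pos; apply pow2_ge_0|lra]). lra. }
  assert (T2b : 2*c*e*D'*t^2 <= 4*c*(K-1)*e^2*p^2*L).
  { replace (2*c*e*D'*t^2) with ((2*c*e*t) * (D'*t)) by ring.
    assert (0 <= 2*c*e*t) by nra.
    apply Rle_trans with ((2*c*e*t) * ((K-1)*L*p)). apply Rmult_le_compat_l; lra.
    right. unfold t. ring. }
  assert (T3 : (d-1) * (t^3/(3*(1-t))) <= 4*K*L*e^2/(3*(1-2*e))).
  { assert (d - 1 <= K*L/(2*e)).
    { rewrite Ed. unfold lam. replace (K*((1/(2*e) - 2)*L)) with (K*L/(2*e) - 2*K*L) by (field; lra). nra. }
    assert (0 <= d - 1) by (rewrite Ed; nra).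
    assert (t^3 <= (2*e)^3) by (apply pow_incr; lra).
    assert (t^3/(3*(1-t)) <= (2*e)^3/(3*(1-2*e))).
    { apply Rle_trans with ((2*e)^3/(3*(1-t))).
      apply Rmult_le_compat_r. left; apply Rinv_0_lt_compat; lra. auto.
      apply Rmult_le_compat_l. nra. apply Rinv_le_contravar; lra. }
    assert (0 <= t^3/(3*(1-t))) by (apply Rdiv_le_0_compat; [apply pow_le|]; lra).
    apply Rle_trans with (K*L/(2*e) * ((2*e)^3/(3*(1-2*e)))).
    apply Rmult_le_compat; lra.
    right. field. lra. }
  set (B := (K-1)*(K-2)/2 * (2*c*e)^2).
  assert (HB : B <= (9/32) * e).
  { unfold B. assert ((K-1)*(K-2) <= K*K) by nra.
    assert (0 <= (K-1)*(K-2)) by nra.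
    assert ((2*c*e)^2 <= e^2) by nra.
    assert ((K-1)*(K-2)/2*(2*c*e)^2 <= K*K/2 * e^2).
    { apply Rmult_le_compat; nra. }
    nra. }
  assert (T4 : L * (1 - p) - 2*c*e*(K-1)*L*p >= - L * B * (1 + 3/32)).
  { assert (1 - p >= A - B) by (unfold A, B in *; lra).
    replace (L * (1 - p) - 2*c*e*(K-1)*L*p) with (L * ((1-p)*(1+A) - A)) by (unfold A; ring).
    assert ((1-p)*(1+A) >= (A - B)*(1+A)) by (apply Rle_ge, Rmult_le_compat_r; lra).
    assert (0 <= B) by (unfold B; nra).
    assert (L * ((1-p)*(1+A) - A) >= L * (- B * (1 + 3/32))).
    { apply Rle_ge, Rmult_le_compat_l. lra. nra. }
    lra. }
  assert (F5 : 4*K*L*e^2/(3*(1-2*e)) <= 0.0895 * e).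
  { apply (Rmult_le_reg_r (3*(1-2*e))). lra. field_simplify; try lra.
    assert (K*e*L <= 3/32 * 0.6932) by nra. nra. }
  assert (F6 : 4*c*(K-1)*e^2*p^2*L <= 0.131 * e).
  { assert (c*(K-1)*e <= 3/64) by nra.
    assert (p^2*L <= 0.6932) by nra.
    assert (0 <= c*(K-1)*e) by nra.
    replace (4*c*(K-1)*e^2*p^2*L) with (4 * (c*(K-1)*e) * (p^2*L) * e) by ring.
    assert (4 * (c*(K-1)*e) * (p^2*L) <= 4 * (3/64) * 0.6932).
    { assert (0 <= p^2*L) by nra. nra. }
    nra. }
  assert (F7 : 3 * p * L * e <= 4*e*p*L - e*p^2*L).
  { assert (0 <= e*p*L*(1-p)) by (repeat apply Rmult_le_pos; lra). nra. }
  assert (F8 : 3 * (29/32) * 0.693 * e <= 3 * p * L * e).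
  { assert ((29/32)*0.693 <= p*L) by (apply Rmult_le_compat; lra).
    assert ((29/32)*0.693*e <= p*L*e) by (apply Rmult_le_compat_r; lra). lra. }
  assert (F9 : L * B * (1 + 3/32) <= 0.6932 * (9/32) * (35/32) * e).
  { assert (0 <= B) by (unfold B; nra). nra. }
  replace (L - 2*c*e + D' * (u + u^2/2) + (d-1) * (- t - t^2/2 - t^3/(3*(1-t))))
    with (L - 2*c*e + (D'*u - (d-1)*t) + (D'*(u^2/2) - (d-1)*(t^2/2)) - (d-1)*(t^3/(3*(1-t)))) by ring.
  rewrite I1.
  assert (-2*c*e*D'*t >= - 2*c*e*((K-1)*L*p)).
  { assert (0 <= 2*c*e) by nra. assert (0 <= 2*c*e*((K-1)*L*p - D'*t)) by (apply Rmult_le_pos; lra). lra. }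
  lra.
Qed.

Section Red.
Variable k : nat.
Hypothesis hk : (3 <= k)%nat.
Hypothesis Hd1 : 1 <= d_lbd k.
Hypothesis Hlu : d_lbd k <= d_ubd k.
Hypothesis Hex : aa k < Psi k (d_lbd k) (aa k).
Hypothesis Hdec : forall d, in_d_interval k d -> forall x y, aa k <= x -> x < y -> y <= 1/2 ->
   Psi k d y - y < Psi k d x - x.
Hypothesis Hsl : exists x0, aa k <= x0 <= 1/2 /\ x0 <= Psi k (d_lbd k) x0 /\
   forall x, x0 <= x <= 1/2 -> Phi k (d_lbd k) x > 0.
Hypothesis Hsu : exists x1, aa k <= x1 <= 1/2 /\ x1 <= Psi k (d_ubd k) x1 /\
   forall x, x1 <= x <= 1/2 -> Phi k (d_ubd k) x < 0.

Let Ha := aa_bounds k hk.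

Lemma dge1 d : in_d_interval k d -> 1 <= d.
Proof. unfold in_d_interval. lra. Qed.

Lemma ex_d d : in_d_interval k d -> aa k < Psi k d (aa k).
Proof.
  intros Hd. pose proof (dge1 d Hd). unfold in_d_interval in Hd.
  pose proof (Psi_mono_d k (d_lbd k) d (aa k) hk ltac:(lra) Hd1 ltac:(lra)). lra.
Qed.

Lemma cont_g d x : 1 <= d -> 0 < x <= 1/2 -> continuity_pt (fun y => y - Psi k d y) x.
Proof.
  intros Hd Hx.
  exact (continuity_pt_minus (fun y => y) (fun y => Psi k d y) x (derivable_continuous_pt _ _ (derivable_pt_id x)) (cont_Psi_x k d x hk Hx Hd)).
Qed.

Lemma exists_root d : in_d_interval k d -> exists x, in_root_interval k x /\ Psi k d x = x.
Proof.
  intros Hd. pose proof (dge1 d Hd).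
  destruct (IVT_interv (fun y => y - Psi k d y) (aa k) (1/2)) as [z [Hz Hfz]].
  - intros y Hy. apply cont_g; auto. lra.
  - lra.
  - pose proof (ex_d d Hd). lra.
  - pose proof (Psi_half_lt k d hk H). lra.
  - exists z. split. unfold in_root_interval. unfold aa in Hz. lra. lra.
Qed.

Lemma root_ge d r z : in_d_interval k d -> in_root_interval k r -> Psi k d r = r ->
  aa k <= z <= 1/2 -> z <= Psi k d z -> z <= r.
Proof.
  intros Hd Hr Hpr Hz Hpz. unfold in_root_interval in Hr. fold (aa k) in Hr.
  destruct (Rle_or_lt z r) as [|Hlt]; auto.
  pose proof (Hdec d Hd r z ltac:(lra) Hlt ltac:(lra)). lra.
Qed.

Lemma root_gt d r z : in_d_interval k d -> in_root_interval k r -> Psi k d r = r ->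
  aa k <= z <= 1/2 -> z < Psi k d z -> z < r.
Proof.
  intros Hd Hr Hpr Hz Hpz. unfold in_root_interval in Hr. fold (aa k) in Hr.
  destruct (Rlt_or_le z r) as [|Hle]; auto.
  destruct (Req_dec z r) as [->|Hn]. lra.
  pose proof (Hdec d Hd r z ltac:(lra) ltac:(lra) ltac:(lra)). lra.
Qed.

Lemma root_lt d r z : in_d_interval k d -> in_root_interval k r -> Psi k d r = r ->
  aa k <= z <= 1/2 -> Psi k d z < z -> r < z.
Proof.
  intros Hd Hr Hpr Hz Hpz. unfold in_root_interval in Hr. fold (aa k) in Hr.
  destruct (Rlt_or_le r z) as [|Hle]; auto.
  destruct (Req_dec z r) as [->|Hn]. lra.
  pose proof (Hdec d Hd z r ltac:(lra) ltac:(lra) ltac:(lra)). lra.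
Qed.

Lemma unique_root d : in_d_interval k d -> exists! x, in_root_interval k x /\ Psi k d x = x.
Proof.
  intros Hd. destruct (exists_root d Hd) as [x [Hx Hpx]].
  exists x. split. auto. intros y [Hy Hpy].
  pose proof (root_ge d x y Hd Hx Hpx). pose proof (root_ge d y x Hd Hy Hpy).
  unfold in_root_interval in *. fold (aa k) in *. 
  assert (y <= x) by (apply H; lra). assert (x <= y) by (apply H0; lra). lra.
Qed.

Lemma lbd_in : in_d_interval k (d_lbd k).
Proof. unfold in_d_interval; lra. Qed.
Lemma ubd_in : in_d_interval k (d_ubd k).
Proof. unfold in_d_interval; lra. Qed.

Theorem reduction_main :
  (forall d : R, in_d_interval k d ->
     exists! x : R, in_root_interval k x /\ Psi k d x = x) /\
  (forall xs : R -> R,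
     (forall d : R, in_d_interval k d ->
        in_root_interval k (xs d) /\ Psi k d (xs d) = xs d) ->
     (forall d0 : R, in_d_interval k d0 ->
        limit1_in (fun d => Phi k d (xs d)) (in_d_interval k)
                  (Phi k d0 (xs d0)) d0) /\
     Phi k (d_lbd k) (xs (d_lbd k)) > 0 /\
     Phi k (d_ubd k) (xs (d_ubd k)) < 0).
Proof.
  split. exact unique_root.
  intros xs Hxs. split; [|split].
  3: { destruct Hsu as [x1 [Hx1 [Hp1 HPhi]]].
       destruct (Hxs _ ubd_in) as [Hr Hpr].
       pose proof (root_ge _ _ x1 ubd_in Hr Hpr Hx1 Hp1).
       apply HPhi. unfold in_root_interval in Hr. lra. }
  2: { destruct Hsl as [x1 [Hx1 [Hp1 HPhi]]].
       destruct (Hxs _ lbd_in) as [Hr Hpr].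
       pose proof (root_ge _ _ x1 lbd_in Hr Hpr Hx1 Hp1).
       apply HPhi. unfold in_root_interval in Hr. lra. }
  intros d0 Hd0 eps Heps.
  destruct (Hxs d0 Hd0) as [Hr0 Hpr0].
  set (r0 := xs d0) in *.
  assert (Hr0' : aa k <= r0 <= 1/2) by (unfold in_root_interval in Hr0; unfold aa; lra).
  assert (Hd0' := dge1 d0 Hd0).
  destruct (cont_eps (PP k) r0 (cont_PP k r0 hk ltac:(lra)) (eps/3) ltac:(lra)) as [e1 [He1 HP]].
  set (M := Rabs d0 + 1).
  assert (HM : 0 < M) by (unfold M; pose proof (Rabs_pos d0); lra).
  destruct (cont_eps (QQ k) r0 (cont_QQ k r0 hk ltac:(lra)) (eps/(3*M))) as [e2 [He2 HQ]].
  { apply Rdiv_lt_0_compat; lra. }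
  set (eta := Rmin e1 e2 / 2).
  assert (Heta : 0 < eta /\ eta < e1 /\ eta < e2).
  { unfold eta. pose proof (Rmin_l e1 e2). pose proof (Rmin_r e1 e2).
    assert (0 < Rmin e1 e2) by (apply Rmin_pos; lra). lra. }
  assert (HL : exists dl, 0 < dl /\ forall d, in_d_interval k d -> Rabs (d - d0) < dl -> r0 - eta < xs d).
  { destruct (Rlt_or_le (r0 - eta) (aa k)) as [Hlt|Hge].
    - exists 1. split. lra. intros d Hd _. destruct (Hxs d Hd) as [Hr _].
      unfold in_root_interval in Hr. fold (aa k) in Hr. lra.
    - pose proof (Hdec d0 Hd0 (r0 - eta) r0 Hge ltac:(lra) ltac:(lra)) as Hm.
      set (m := Psi k d0 (r0 - eta) - (r0 - eta)).
      destruct (cont_eps (fun e => Psi k e (r0 - eta)) d0 (cont_Psi_d k d0 (r0-eta) hk ltac:(lra) Hd0') m ltac:(unfold m; lra)) as [dl [Hdl Hc]].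
      exists dl. split. auto. intros d Hd Hdd.
      specialize (Hc d Hdd). simpl in Hc.
      destruct (Hxs d Hd) as [Hr Hpr].
      apply (root_gt d _ _ Hd Hr Hpr). lra.
      apply Rabs_def2 in Hc. unfold m in Hc. lra. }
  assert (HR : exists dr, 0 < dr /\ forall d, in_d_interval k d -> Rabs (d - d0) < dr -> xs d < r0 + eta).
  { destruct (Rlt_or_le (1/2) (r0 + eta)) as [Hlt|Hge].
    - exists 1. split. lra. intros d Hd _. destruct (Hxs d Hd) as [Hr _].
      unfold in_root_interval in Hr. lra.
    - pose proof (Hdec d0 Hd0 r0 (r0 + eta) ltac:(lra) ltac:(lra) Hge) as Hm.
      set (m := (r0 + eta) - Psi k d0 (r0 + eta)).
      destruct (cont_eps (fun e => Psi k e (r0 + eta)) d0 (cont_Psi_d k d0 (r0+eta) hk ltac:(lra) Hd0') m ltac:(unfold m; lra)) as [dr [Hdr Hc]].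
      exists dr. split. auto. intros d Hd Hdd.
      specialize (Hc d Hdd). simpl in Hc.
      destruct (Hxs d Hd) as [Hr Hpr].
      apply (root_lt d _ _ Hd Hr Hpr). lra.
      apply Rabs_def2 in Hc. unfold m in Hc. lra. }
  destruct HL as [dl [Hdl HL]]. destruct HR as [dr [Hdr HR]].
  set (dQ := eps / (3 * (Rabs (QQ k r0) + 1))).
  assert (HdQ : 0 < dQ) by (unfold dQ; pose proof (Rabs_pos (QQ k r0)); apply Rdiv_lt_0_compat; lra).
  exists (Rmin (Rmin 1 dQ) (Rmin dl dr)). split.
  { repeat apply Rmin_pos; lra. }
  intros d [Hd Hdist]. simpl in Hdist. unfold Rdist in Hdist. simpl. unfold Rdist.
  assert (Hdd1 : Rabs (d - d0) < 1) by (eapply Rlt_le_trans; [exact Hdist|]; eapply Rle_trans; [apply Rmin_l|apply Rmin_l]).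
  assert (Hdd2 : Rabs (d - d0) < dQ) by (eapply Rlt_le_trans; [exact Hdist|]; eapply Rle_trans; [apply Rmin_l|apply Rmin_r]).
  assert (Hdd3 : Rabs (d - d0) < dl) by (eapply Rlt_le_trans; [exact Hdist|]; eapply Rle_trans; [apply Rmin_r|apply Rmin_l]).
  assert (Hdd4 : Rabs (d - d0) < dr) by (eapply Rlt_le_trans; [exact Hdist|]; eapply Rle_trans; [apply Rmin_r|apply Rmin_r]).
  specialize (HL d Hd Hdd3). specialize (HR d Hd Hdd4).
  assert (Hx : Rabs (xs d - r0) < eta) by (apply Rabs_def1; lra).
  specialize (HP (xs d) ltac:(lra)). specialize (HQ (xs d) ltac:(lra)).
  pose proof (dge1 d Hd).
  rewrite (Phi_PQ k d) by (auto; lra). rewrite (Phi_PQ k d0) by (auto; lra).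
  replace (PP k (xs d) + d * QQ k (xs d) - (PP k r0 + d0 * QQ k r0)) with
    ((PP k (xs d) - PP k r0) + d * (QQ k (xs d) - QQ k r0) + (d - d0) * QQ k r0) by ring.
  assert (Hdb : Rabs d <= M).
  { unfold M. replace d with (d0 + (d - d0)) at 1 by ring.
    pose proof (Rabs_triang d0 (d - d0)). lra. }
  assert (T1 : Rabs (d * (QQ k (xs d) - QQ k r0)) <= M * (eps / (3 * M))).
  { rewrite Rabs_mult. apply Rmult_le_compat; try apply Rabs_pos; lra. }
  assert (T2 : Rabs ((d - d0) * QQ k r0) <= eps / 3).
  { rewrite Rabs_mult.
    apply Rle_trans with (dQ * (Rabs (QQ k r0) + 1)).
    apply Rmult_le_compat; try apply Rabs_pos; lra.
    unfold dQ. right. field. pose proof (Rabs_pos (QQ k r0)). lra. }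
  replace (M * (eps / (3 * M))) with (eps / 3) in T1 by (field; lra).
  eapply Rle_lt_trans. apply Rabs_triang.
  eapply Rle_lt_trans. apply Rplus_le_compat_r. apply Rabs_triang.
  lra.
Qed.

End Red.

Lemma nat_bounds (m : nat) : (16*((6+m)*(6+m)) <= 9 * 2^(6+m))%nat /\ (32*(6+m) <= 3*2^(6+m))%nat.
Proof.
  induction m as [|m [IH1 IH2]]. simpl. lia.
  replace (6 + S m)%nat with (S (6+m)) by lia. rewrite Nat.pow_succ_r'. split; nia.
Qed.

Lemma half_pow (k : nat) : (1 <= k)%nat -> (1/2)^(k-1) = 2 * (1/2^k).
Proof.
  intros Hk. replace k with (S (k-1)) at 2 by lia. simpl.
  replace (1/2) with (/2) at 1 by field.
  rewrite pow_inv. field. apply pow_nonzero. lra.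
Qed.

Lemma ln_e (k : nat) : ln (1/2^k) = - (INR k * ln 2).
Proof.
  unfold Rdiv. rewrite Rmult_1_l, ln_Rinv. rewrite ln_pow. ring. lra. apply pow_lt; lra.
Qed.

Lemma lbd_formula (k : nat) : (5 <= k)%nat -> d_lbd k = (2^(k-1) - 2) * INR k * ln 2.
Proof. intros Hk. destruct k as [|[|[|[|[|k]]]]]; try lia. reflexivity. Qed.

Lemma ubd_formula (k : nat) : (4 <= k)%nat -> d_ubd k = 2^(k-1) * INR k * ln 2.
Proof. intros Hk. destruct k as [|[|[|[|k]]]]; try lia. reflexivity. Qed.

Lemma pow2_e (k : nat) : (1 <= k)%nat -> 2^(k-1) = 1 / (2 * (1/2^k)).
Proof.
  intros Hk. replace k with (S (k-1)) at 2 by lia. simpl. field. apply pow_nonzero; lra.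
Qed.

Lemma Phi_repr k d x : (3 <= k)%nat -> d <> 0 ->
  Phi k d x = - ln (1 - x) - (d * (1 - / INR k) - 1) * ln (1 - 2 * x * x^(k-1)) + (d - 1) * ln (1 - x^(k-1)).
Proof.
  intros Hk Hd. unfold Phi. assert (INR k <> 0) by (apply not_0_INR; lia).
  assert (Hxk : x^k = x * x^(k-1)) by (destruct k; [lia| simpl; rewrite Nat.sub_0_r; reflexivity]).
  rewrite Hxk. replace (d * (1 - / INR k - / d)) with (d * (1 - / INR k) - 1) by (field; auto).
  replace (2 * (x * x^(k-1))) with (2 * x * x^(k-1)) by ring. ring.
Qed.

Section Gen.
Variable k : nat.
Hypothesis hk : (6 <= k)%nat.
Let hk3 : (3 <= k)%nat. Proof. lia. Qed.
Let e := 1/2^k.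
Let K := INR k.
Let L := ln 2.

Lemma e_facts : 0 < e /\ e <= 1/64 /\ K * e <= 3/32 /\ K * K * e <= 9/16 /\ 6 <= K.
Proof.
  destruct (nat_bounds (k-6)) as [H1 H2]. replace (6 + (k-6))%nat with k in * by lia.
  apply le_INR in H1. apply le_INR in H2. rewrite !mult_INR in H1. rewrite !mult_INR in H2. rewrite !pow_INR in H1. rewrite !pow_INR in H2.
  replace (INR 2) with 2 in * by (simpl; lra). replace (INR 16) with 16 in * by (simpl; lra).
  replace (INR 9) with 9 in * by (simpl; lra). replace (INR 32) with 32 in * by (simpl; lra).
  replace (INR 3) with 3 in * by (simpl; lra).
  assert (H6 : 6 <= K) by (unfold K; replace 6 with (INR 6) by (simpl; lra); apply le_INR; lia).
  assert (Hp : 0 < 2^k) by (apply pow_lt; lra).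
  fold K in H1, H2. unfold e.
  assert (64 <= 2^k).
  { replace k with (6 + (k-6))%nat by lia. rewrite pow_add.
    assert (1 <= 2^(k-6)) by (apply pow_R1_Rle; lra). simpl. nra. }
  repeat split.
  - apply Rdiv_lt_0_compat; lra.
  - apply (Rmult_le_reg_r (2^k)). lra. field_simplify; lra.
  - replace (K * (1/2^k)) with (K / 2^k) by (field; lra).
    apply (Rmult_le_reg_r (2^k)). lra. field_simplify; lra.
  - replace (K * K * (1/2^k)) with (K * K / 2^k) by (field; lra).
    apply (Rmult_le_reg_r (2^k)). lra. field_simplify; lra.
  - lra.
Qed.

Lemma lbd_e : d_lbd k = (1/(2*e) - 2) * K * L.
Proof. rewrite lbd_formula by lia. rewrite pow2_e by lia. reflexivity. Qed.

Lemma ubd_e : d_ubd k = K * L / (2*e).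
Proof. rewrite ubd_formula by lia. rewrite pow2_e by lia. fold e K L. field.
  pose proof e_facts. lra. Qed.

Lemma t_repr (x : R) : x^(k-1) = 2 * e * (1 - 2 * ((1/2 - x)/e) * e)^(k-1).
Proof.
  pose proof e_facts as [He _].
  replace (1 - 2 * ((1/2 - x)/e) * e) with (2 * x) by (field; lra).
  rewrite Rpow_mult_distr. 
  replace (2^(k-1)) with (1/(2*e)).
  field. lra. rewrite pow2_e by lia. reflexivity.
Qed.

Lemma p_bounds (c : R) : 0 <= c <= 1 ->
  1 - (K-1) * (2*c*e) <= (1 - 2*c*e)^(k-1) <= 1 - (K-1) * (2*c*e) + (K-1)*(K-2)/2 * (2*c*e)^2
  /\ (1 - 2*c*e)^(k-1) <= 1.
Proof.
  intros Hc. pose proof e_facts as [He [He1 _]].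
  assert (Hz : 0 <= 2*c*e <= 1) by nra.
  pose proof (bern_lo (2*c*e) (k-1) Hz) as B1. pose proof (bern_hi (2*c*e) (k-1) Hz) as B2.
  rewrite minus_INR in B1, B2 by lia. replace (INR 1) with 1 in B1, B2 by reflexivity. fold K in B1, B2.
  replace (K - 1 - 1) with (K - 2) in B2 by ring.
  split. split; lra. apply pow_le1. lra.
Qed.


Lemma aa_e : aa k = 1/2 - e.
Proof. reflexivity. Qed.

Lemma t_lo (x : R) (c0 : R) : 0 <= c0 <= 1 -> 1/2 - c0 * e <= x <= 1/2 ->
  2 * e * (1 - (K-1) * (2*c0*e)) <= x^(k-1) <= 2 * e.
Proof.
  intros Hc0 Hx. destruct e_facts as [He [He1 [Hu [Hq HK]]]].
  rewrite t_repr. set (c := (1/2 - x)/e).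
  assert (Hc : 0 <= c <= c0).
  { unfold c. split. apply Rdiv_le_0_compat; lra.
    apply (Rmult_le_reg_r e). lra. field_simplify; lra. }
  destruct (p_bounds c ltac:(lra)) as [[Hp1 Hp2] Hp3].
  split; [|nra].
  apply Rmult_le_compat_l. lra.
  assert ((K-1) * (2*c*e) <= (K-1) * (2*c0*e)) by (apply Rmult_le_compat_l; nra). lra.
Qed.

Lemma lnv_le_t (x : R) : 0 < x <= 1/2 -> ln (Psi_hat k x) <= - x^(k-1).
Proof.
  intros Hx. pose proof (t_bounds k x hk3 Hx). pose proof (v_bounds k x hk3 Hx).
  pose proof (ln_le_sub1 _ (proj1 H0)).
  assert (Psi_hat k x - 1 <= - x^(k-1)).
  { unfold Psi_hat. set (t := x^(k-1)) in *.
    replace ((1 - 2*t)/(1-t) - 1) with (- (t / (1-t))) by (field; lra).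
    apply Ropp_le_contravar. apply (Rmult_le_reg_r (1-t)). lra.
    field_simplify; nra. }
  lra.
Qed.

Lemma ln_4e : 2 * L - K * L - 2 * e <= ln (4 * e / (1 + 2 * e)).
Proof.
  destruct e_facts as [He _].
  unfold Rdiv. rewrite ln_mult; [| apply Rmult_lt_0_compat; lra | apply Rinv_0_lt_compat; lra].
  rewrite ln_mult by lra. rewrite ln_Rinv by lra.
  replace 4 with (2^2) by ring. rewrite ln_pow by lra.
  unfold e. rewrite ln_e. fold K L.
  pose proof (ln_le_sub1 (1 + 2 * (1/2^k)) ltac:(fold e; lra)). fold e in H |- *. simpl. lra.
Qed.

Lemma lbd_ge : 100 <= d_lbd k.
Proof.
  rewrite lbd_e. destruct e_facts as [He [He1 [Hu [Hq HK]]]]. pose proof ln2_bounds. fold L in H.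
  assert (32 <= 1/(2*e)). { apply (Rmult_le_reg_r (2*e)). lra. field_simplify; lra. }
  assert (180 <= (1/(2*e) - 2) * K) by nra. nra.
Qed.

Lemma G_W (d x : R) : d_lbd k <= d -> aa k <= x <= 1/2 -> Wf k d x < 4 * e / (1 + 2 * e).
Proof.
  intros Hd Hx. rewrite aa_e in Hx.
  destruct e_facts as [He [He1 [Hu [Hq HK]]]]. pose proof ln2_bounds as HL. fold L in HL.
  pose proof lbd_ge as Hlb.
  destruct (t_lo x 1 ltac:(lra) ltac:(lra)) as [Ht _].
  pose proof (lnv_le_t x ltac:(lra)) as Hv.
  assert (HlnW : (d - 1) * ln (Psi_hat k x) <= - (d_lbd k - 1) * (2 * e * (1 - (K-1) * (2*1*e)))).
  { assert ((d-1) * ln (Psi_hat k x) <= (d-1) * (- x^(k-1))) by (apply Rmult_le_compat_l; lra).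
    assert (0 <= 2 * e * (1 - (K-1) * (2*1*e))) by nra.
    nra. }
  assert (Heq : (d_lbd k - 1) * (2 * e) = (1 - 4*e) * K * L - 2 * e).
  { rewrite lbd_e. field. lra. }
  assert (Hkey : - (d_lbd k - 1) * (2 * e * (1 - (K-1) * (2*1*e))) < 2 * L - K * L - 2 * e).
  { replace (- (d_lbd k - 1) * (2 * e * (1 - (K-1) * (2*1*e)))) with
       (- ((d_lbd k - 1) * (2 * e)) * (1 - (K-1) * (2*1*e))) by ring.
    rewrite Heq.
    assert (A1 : L * (K * K * e) <= 0.6932 * (9/16)) by (apply Rmult_le_compat; nra).
    assert (A2 : L * (K * e) <= 0.6932 * (3/32)) by (apply Rmult_le_compat; nra).
    assert (A3 : e * (L * (K * e)) <= (1/64) * (0.6932 * (3/32))) by (apply Rmult_le_compat; nra).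
    nra. }
  pose proof ln_4e.
  unfold Wf, Rpower.
  replace (4 * e / (1 + 2 * e)) with (exp (ln (4 * e / (1 + 2 * e)))).
  apply exp_increasing. lra.
  apply exp_ln. apply Rdiv_lt_0_compat; lra.
Qed.


Lemma G_ex : aa k < Psi k (d_lbd k) (aa k).
Proof.
  pose proof lbd_ge. destruct e_facts as [He [He1 _]].
  pose proof (aa_bounds k hk3).
  apply Psi_gt_crit; auto; try lra.
  pose proof (G_W (d_lbd k) (aa k) ltac:(lra) ltac:(lra)) as HW.
  rewrite aa_e in *.
  pose proof (W_pos k (d_lbd k) (1/2 - e)).
  apply (Rmult_lt_compat_r (1 - (1/2 - e))) in HW; [|lra].
  replace (4 * e / (1 + 2 * e) * (1 - (1 / 2 - e))) with (1 - 2 * (1/2 - e)) in HW by (field; lra).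
  exact HW.
Qed.

Lemma quarter_pow : (1/2)^(k-2) = 4 * e.
Proof.
  pose proof (half_pow k ltac:(lia)). fold e in H.
  replace (k-1)%nat with (S (k-2)) in H by lia. simpl in H. lra.
Qed.

Lemma G_dec (d : R) : in_d_interval k d -> forall x y, aa k <= x -> x < y -> y <= 1/2 ->
   Psi k d y - y < Psi k d x - x.
Proof.
  intros Hd x y Hx Hxy Hy. unfold in_d_interval in Hd.
  pose proof lbd_ge. destruct e_facts as [He [He1 [Hu [Hq HK]]]].
  pose proof ln2_bounds as HL. fold L in HL.
  pose proof (aa_bounds k hk3) as Ha.
  pose proof (dec_core k d x y hk3 ltac:(lra) ltac:(lra) Hxy Hy) as Hc.
  pose proof (G_W d x ltac:(lra) ltac:(lra)) as Wx. pose proof (G_W d y ltac:(lra) ltac:(lra)) as Wy.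
  pose proof (W_pos k d x). pose proof (W_pos k d y).
  rewrite aa_e in Hx.
  destruct (t_lo x 1 ltac:(lra) ltac:(lra)) as [_ Htx]. destruct (t_lo y 1 ltac:(lra) ltac:(lra)) as [_ Hty].
  pose proof (t_bounds k x hk3 ltac:(lra)) as Htx'. pose proof (t_bounds k y hk3 ltac:(lra)) as Hty'.
  assert (Hdiff : y^(k-1) - x^(k-1) <= (K-1) * (4*e) * (y - x)).
  { replace (k-1)%nat with (S (k-2)) by lia.
    pose proof (pow_diff_le x y (k-2) ltac:(lra)).
    rewrite S_INR, minus_INR in H2 by lia. replace (INR 2) with 2 in H2 by reflexivity.
    fold K in H2. rewrite <- quarter_pow.
    assert (y^(k-2) <= (1/2)^(k-2)) by (apply pow_incr; lra).
    assert (0 <= K - 1) by lra.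
    assert (0 <= y^(k-2)) by (apply pow_le; lra).
    assert ((K - 2 + 1) * y^(k-2) * (y - x) <= (K-1) * (1/2)^(k-2) * (y - x)).
    { replace (K - 2 + 1) with (K - 1) by ring. apply Rmult_le_compat_r. lra.
      apply Rmult_le_compat_l; lra. }
    lra. }
  set (tx := x^(k-1)) in *. set (ty := y^(k-1)) in *.
  set (wx := Wf k d x) in *. set (wy := Wf k d y) in *.
  assert (Hvy : 1 - 4*e <= Psi_hat k y).
  { unfold Psi_hat. fold ty. apply (Rmult_le_reg_r (1 - ty)). lra.
    field_simplify; nra. }
  assert (H4 : 4 * e / (1 + 2 * e) <= 4 * e).
  { apply (Rmult_le_reg_r (1 + 2*e)). lra. field_simplify; nra. }
  set (N := (d - 1) * wx * (ty - tx)).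
  set (Dn := (1 - tx) * (1 - ty) * Psi_hat k y * ((2 - wx) * (2 - wy))).
  assert (HN : N <= (K * L / (2*e)) * (4*e) * ((K-1) * (4*e) * (y - x))).
  { unfold N. rewrite ubd_e in Hd.
    assert (0 <= ty - tx).
    { unfold ty, tx. assert (x^(k-1) <= y^(k-1)) by (apply pow_incr; lra). lra. }
    apply Rmult_le_compat; try nra.
  }
  assert (HD : (1 - 2*e)^2 * (1 - 4*e) * (2 - 4*e)^2 <= Dn).
  { unfold Dn.
    assert ((1-2*e)^2 <= (1 - tx) * (1 - ty)) by nra.
    assert ((2-4*e)^2 <= (2 - wx) * (2 - wy)) by nra.
    assert (0 <= (1-2*e)^2) by nra. assert (0 <= (2-4*e)^2) by nra.
    assert ((1-2*e)^2 * (1-4*e) <= (1 - tx) * (1 - ty) * Psi_hat k y) by (apply Rmult_le_compat; nra).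
    apply Rmult_le_compat; nra. }
  assert (Hkey : (K * L / (2*e)) * (4*e) * ((K-1) * (4*e) * (y - x)) < (1 - 2*e)^2 * (1 - 4*e) * (2 - 4*e)^2 * (y - x)).
  { replace ((K * L / (2*e)) * (4*e) * ((K-1) * (4*e) * (y - x))) with (8 * (L * (K * K * e) - L * (K * e)) * (y - x)) by (field; lra).
    apply Rmult_lt_compat_r. lra.
    assert (A1 : L * (K * K * e) <= 0.6932 * (9/16)) by (apply Rmult_le_compat; nra).
    assert (A2 : 0 <= L * (K * e)) by (apply Rmult_le_pos; [lra| apply Rmult_le_pos; lra]).
    assert (A3 : 3.29 <= (1 - 2*e)^2 * (1 - 4*e) * (2 - 4*e)^2).
    { assert (0.938 <= (1-2*e)^2) by nra. assert (3.75 <= (2-4*e)^2) by nra.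
      assert (0.9375 <= 1 - 4*e) by lra.
      assert (0.938 * 0.9375 <= (1-2*e)^2 * (1-4*e)) by (apply Rmult_le_compat; lra).
      assert (0.938 * 0.9375 * 3.75 <= (1-2*e)^2 * (1-4*e) * (2-4*e)^2) by (apply Rmult_le_compat; lra).
      lra. }
    lra. }
  assert (HDpos : 0 < Dn) by nra.
  assert (Psi k d y - Psi k d x <= N / Dn) by (unfold N, Dn; exact Hc).
  assert (N / Dn < y - x).
  { apply (Rmult_lt_reg_r Dn). lra. unfold Rdiv. rewrite Rmult_assoc, Rinv_l by lra.
    assert ((y - x) * ((1 - 2*e)^2 * (1 - 4*e) * (2 - 4*e)^2) <= (y - x) * Dn) by (apply Rmult_le_compat_l; lra).
    lra. }
  lra.
Qed.


Lemma ln_1mx (x : R) (c : R) : x = 1/2 - c * e -> 0 <= c <= 1 ->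
  ln (1 - x) = ln (1 + 2*c*e) - L.
Proof.
  intros Hx Hc. destruct e_facts as [He [He1 _]].
  replace (1 - x) with ((1 + 2*c*e) * /2) by (rewrite Hx; field).
  rewrite ln_mult by (try apply Rinv_0_lt_compat; nra). rewrite ln_Rinv by lra. reflexivity.
Qed.

Lemma G3 : 1/2 - e/2 < Psi k (d_lbd k) (1/2 - e/2).
Proof.
  pose proof lbd_ge. destruct e_facts as [He [He1 [Hu [Hq HK]]]].
  pose proof ln2_bounds as HL. fold L in HL.
  apply Psi_gt_crit; auto; try lra.
  destruct (t_lo (1/2 - e/2) (1/2) ltac:(lra) ltac:(lra)) as [Ht _].
  pose proof (lnv_le_t (1/2 - e/2) ltac:(lra)) as Hv.
  set (x0 := 1/2 - e/2) in *.
  assert (HlnW : (d_lbd k - 1) * ln (Psi_hat k x0) <= - (d_lbd k - 1) * (2 * e * (1 - (K-1) * (2*(1/2)*e)))).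
  { assert ((d_lbd k-1) * ln (Psi_hat k x0) <= (d_lbd k-1) * (- x0^(k-1))) by (apply Rmult_le_compat_l; lra).
    assert (0 <= 2 * e * (1 - (K-1) * (2*(1/2)*e))) by nra.
    nra. }
  assert (Heq : (d_lbd k - 1) * (2 * e) = (1 - 4*e) * K * L - 2 * e).
  { rewrite lbd_e. field. lra. }
  assert (Hln : L - K * L - e <= ln (2 * e / (1 + e))).
  { unfold Rdiv. rewrite ln_mult; [| apply Rmult_lt_0_compat; lra | apply Rinv_0_lt_compat; lra].
    rewrite ln_mult by lra. rewrite ln_Rinv by lra.
    unfold e at 2. rewrite ln_e. fold K L.
    pose proof (ln_le_sub1 (1 + e) ltac:(lra)). lra. }
  assert (Hkey : - (d_lbd k - 1) * (2 * e * (1 - (K-1) * (2*(1/2)*e))) < L - K * L - e).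
  { replace (- (d_lbd k - 1) * (2 * e * (1 - (K-1) * (2*(1/2)*e)))) with
       (- ((d_lbd k - 1) * (2 * e)) * (1 - (K-1) * e)) by field.
    rewrite Heq.
    assert (A1 : L * (K * K * e) <= 0.6932 * (9/16)) by (apply Rmult_le_compat; nra).
    assert (A2 : L * (K * e) <= 0.6932 * (3/32)) by (apply Rmult_le_compat; nra).
    assert (A3 : e * (L * (K * e)) <= (1/64) * (0.6932 * (3/32))) by (apply Rmult_le_compat; nra).
    nra. }
  assert (HW : Wf k (d_lbd k) x0 < 2 * e / (1 + e)).
  { unfold Wf, Rpower.
    replace (2 * e / (1 + e)) with (exp (ln (2 * e / (1 + e)))).
    apply exp_increasing. lra.
    apply exp_ln. apply Rdiv_lt_0_compat; lra. }
  pose proof (W_pos k (d_lbd k) x0).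
  apply (Rmult_lt_compat_r (1 - x0)) in HW; [|unfold x0; lra].
  replace (2 * e / (1 + e) * (1 - x0)) with (1 - 2 * x0) in HW by (unfold x0; field; lra).
  exact HW.
Qed.

Lemma G4 (x : R) : 1/2 - e/2 <= x <= 1/2 -> Phi k (d_lbd k) x > 0.
Proof.
  intros Hx. pose proof lbd_ge. destruct e_facts as [He [He1 [Hu [Hq HK]]]].
  pose proof ln2_bounds as HL. fold L in HL.
  rewrite Phi_repr by (auto; lra). change (INR k) with K.
  set (c := (1/2 - x)/e).
  assert (Hc : 0 <= c <= 1/2).
  { unfold c. split. apply Rdiv_le_0_compat; lra.
    apply (Rmult_le_reg_r e). lra. field_simplify; lra. }
  assert (Hxc : x = 1/2 - c * e) by (unfold c; field; lra).
  destruct (p_bounds c ltac:(lra)) as [[Hp1 Hp2] Hp3].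
  rewrite t_repr. fold c. set (p := (1 - 2*c*e)^(k-1)) in *.
  rewrite (ln_1mx x c Hxc ltac:(lra)).
  replace (2 * x * (2 * e * p)) with ((1 - 2*c*e) * (2*e*p)) by (rewrite Hxc; field).
  assert (Hp0 : 0.8 <= p) by nra.
  assert (Ht : 0 < 2*e*p <= 2*e) by nra.
  assert (Hu' : 0 <= (1 - 2*c*e) * (2*e*p) < 1) by nra.
  pose proof (ln1m_le _ Hu') as B2.
  pose proof (ln1m_ge (2*e*p) ltac:(lra)) as B3.
  pose proof (ln_le_sub1 (1 + 2*c*e) ltac:(nra)) as B1.
  rewrite lbd_e in *.
  set (D' := (1 / (2 * e) - 2) * K * L * (1 - / K) - 1).
  assert (HD' : 0 <= D').
  { unfold D'. replace ((1 / (2 * e) - 2) * K * L * (1 - / K) - 1) with ((1 / (2 * e) - 2) * (K - 1) * L - 1) by (field; lra).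
    assert (32 <= 1/(2*e)). { apply (Rmult_le_reg_r (2*e)). lra. field_simplify; lra. }
    assert (150 <= (1 / (2 * e) - 2) * (K - 1)) by nra. nra. }
  assert (Hd1 : 0 <= (1 / (2 * e) - 2) * K * L - 1) by lra.
  pose proof (alg4 e K L c p ltac:(lra) HK Hu Hq ltac:(lra) Hc ltac:(lra) Hp3) as HA.
  fold D' in HA.
  assert (S1 : - ln (1 - (1 - 2*c*e) * (2*e*p)) * D' >= ((1-2*c*e)*(2*e*p) + ((1-2*c*e)*(2*e*p))^2/2) * D').
  { apply Rle_ge, Rmult_le_compat_r; lra. }
  assert (S2 : ((1 / (2 * e) - 2) * K * L - 1) * ln (1 - 2*e*p) >=
     ((1 / (2 * e) - 2) * K * L - 1) * (-(2*e*p) - (2*e*p)^2/2 - (2*e*p)^3/(3*(1-2*e*p)))).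
  { apply Rle_ge, Rmult_le_compat_l; lra. }
  lra.
Qed.

Lemma G5 (x : R) : aa k <= x <= 1/2 -> Phi k (d_ubd k) x < 0.
Proof.
  intros Hx. rewrite aa_e in Hx. pose proof lbd_ge. destruct e_facts as [He [He1 [Hu [Hq HK]]]].
  pose proof ln2_bounds as HL. fold L in HL.
  assert (Hub : d_lbd k <= d_ubd k).
  { rewrite lbd_e, ubd_e. replace (K * L / (2 * e)) with ((1/(2*e)) * K * L) by (field; lra). nra. }
  rewrite Phi_repr by (auto; lra). change (INR k) with K.
  set (c := (1/2 - x)/e).
  assert (Hc : 0 <= c <= 1).
  { unfold c. split. apply Rdiv_le_0_compat; lra.
    apply (Rmult_le_reg_r e). lra. field_simplify; lra. }
  assert (Hxc : x = 1/2 - c * e) by (unfold c; field; lra).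
  destruct (p_bounds c ltac:(lra)) as [[Hp1 Hp2] Hp3].
  rewrite t_repr. fold c. set (p := (1 - 2*c*e)^(k-1)) in *.
  rewrite (ln_1mx x c Hxc ltac:(lra)).
  replace (2 * x * (2 * e * p)) with ((1 - 2*c*e) * (2*e*p)) by (rewrite Hxc; field).
  assert (Hp0 : 0.8 <= p) by nra.
  assert (Ht : 0 < 2*e*p <= 2*e) by nra.
  assert (Hu' : 0 <= (1 - 2*c*e) * (2*e*p) < 1) by nra.
  pose proof (ln1m_ge _ Hu') as B2.
  pose proof (ln1m_le (2*e*p) ltac:(lra)) as B3.
  pose proof (ln_ge_1_inv (1 + 2*c*e) ltac:(nra)) as B1.
  replace (1 - / (1 + 2*c*e)) with (2*c*e/(1+2*c*e)) in B1 by (field; nra).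
  rewrite ubd_e in *.
  replace (K * L / (2 * e) * (1 - / K) - 1) with ((K-1)*L/(2*e) - 1) by (field; lra).
  assert (HD' : 0 <= (K-1)*L/(2*e) - 1).
  { assert (32 <= 1/(2*e)). { apply (Rmult_le_reg_r (2*e)). lra. field_simplify; lra. }
    replace ((K-1)*L/(2*e)) with ((K-1)*L*(1/(2*e))) by (field; lra).
    assert (3 <= (K-1)*L) by nra. nra. }
  assert (Hd1 : 0 <= K * L / (2 * e) - 1) by lra.
  pose proof (alg5 e K L c p ltac:(lra) HK Hu Hq ltac:(lra) Hc ltac:(lra)) as HA.
  assert (S1 : - ln (1 - (1 - 2*c*e) * (2*e*p)) * ((K-1)*L/(2*e) - 1) <=
     ((1-2*c*e)*(2*e*p) + ((1-2*c*e)*(2*e*p))^2/2 + ((1-2*c*e)*(2*e*p))^3/(3*(1-(1-2*c*e)*(2*e*p)))) * ((K-1)*L/(2*e) - 1)).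
  { apply Rmult_le_compat_r; lra. }
  assert (S2 : (K * L / (2 * e) - 1) * ln (1 - 2*e*p) <= (K * L / (2 * e) - 1) * (-(2*e*p) - (2*e*p)^2/2)).
  { apply Rmult_le_compat_l; lra. }
  nra.
Qed.

End Gen.

Definition Statement (k : nat) : Prop :=
  (forall d : R, in_d_interval k d ->
     exists! x : R, in_root_interval k x /\ Psi k d x = x) /\
  (forall xs : R -> R,
     (forall d : R, in_d_interval k d ->
        in_root_interval k (xs d) /\ Psi k d (xs d) = xs d) ->
     (forall d0 : R, in_d_interval k d0 ->
        limit1_in (fun d => Phi k d (xs d)) (in_d_interval k)
                  (Phi k d0 (xs d0)) d0) /\
     Phi k (d_lbd k) (xs (d_lbd k)) > 0 /\
     Phi k (d_ubd k) (xs (d_ubd k)) < 0).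


Lemma main_ge6 (k : nat) : (6 <= k)%nat -> Statement k.
Proof.
  intros hk. assert (hk3 : (3 <= k)%nat) by lia.
  pose proof (lbd_ge k hk). pose proof (e_facts k hk) as [He [He1 _]].
  pose proof ln2_bounds.
  assert (Hub : d_lbd k <= d_ubd k).
  { rewrite (lbd_e k hk), (ubd_e k hk). set (E := 1/2^k) in *.
    assert (0 <= INR k * ln 2) by (apply Rmult_le_pos; [apply pos_INR| lra]).
    assert ((1/(2*E) - 2) * INR k * ln 2 = INR k * ln 2 / (2*E) - 2 * (INR k * ln 2)) by (field; lra).
    lra. }
  pose proof (aa_bounds k hk3).
  apply (reduction_main k hk3); try lra.
  - apply G_ex; auto.
  - apply G_dec; auto.
  - exists (1/2 - 1/2^k/2). split. unfold aa. lra. split.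
    pose proof (G3 k hk). lra. apply G4; auto.
  - exists (aa k). split. lra. split.
    pose proof (G_ex k hk). pose proof (Psi_mono_d k (d_lbd k) (d_ubd k) (aa k) hk3 ltac:(lra) ltac:(lra) Hub). lra.
    intros x Hx. apply G5; auto.
Qed.

Lemma ln_scale (Z : R) (j : nat) : 0 < Z -> ln Z = ln (Z / 2^j) + INR j * ln 2.
Proof.
  intros HZ. assert (0 < 2^j) by (apply pow_lt; lra).
  rewrite <- ln_pow by lra. rewrite <- ln_mult. f_equal. field. lra.
  apply Rdiv_lt_0_compat; lra. auto.
Qed.

Lemma lnr_a (Z : R) (j : nat) (lo hi : R) : 2^j <= Z ->
  lo <= lnlo ((Z/2^j - 1)/(Z/2^j + 1)) + INR j * 0.693147 ->
  lnhi ((Z/2^j - 1)/(Z/2^j + 1)) + INR j * 0.6931472 <= hi ->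
  lo <= ln Z <= hi.
Proof.
  intros HZ Hlo Hhi. assert (0 < 2^j) by (apply pow_lt; lra).
  assert (1 <= Z / 2^j) by (apply (Rmult_le_reg_r (2^j)); [lra|]; field_simplify; lra).
  rewrite (ln_scale Z j) by lra. pose proof (ln_bounds _ H0). pose proof ln2_bounds.
  pose proof (pos_INR j).
  assert (INR j * 0.693147 <= INR j * ln 2 <= INR j * 0.6931472) by (split; apply Rmult_le_compat_l; lra).
  lra.
Qed.

Lemma lnr_b (Z : R) (j : nat) (lo hi : R) : 0 < Z <= 2^j ->
  lo <= - lnhi ((2^j/Z - 1)/(2^j/Z + 1)) + INR j * 0.693147 ->
  - lnlo ((2^j/Z - 1)/(2^j/Z + 1)) + INR j * 0.6931472 <= hi ->
  lo <= ln Z <= hi.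
Proof.
  intros HZ Hlo Hhi. assert (0 < 2^j) by (apply pow_lt; lra).
  assert (1 <= 2^j / Z) by (apply (Rmult_le_reg_r Z); [lra|]; field_simplify; lra).
  rewrite (ln_scale Z j) by lra.
  replace (Z / 2^j) with (/ (2^j / Z)) by (field; lra). rewrite ln_Rinv by lra.
  pose proof (ln_bounds _ H0). pose proof ln2_bounds.
  pose proof (pos_INR j).
  assert (INR j * 0.693147 <= INR j * ln 2 <= INR j * 0.6931472) by (split; apply Rmult_le_compat_l; lra).
  lra.
Qed.

Lemma ln_neg_range (Z : R) (lo hi : R) : 0 < Z -> lo <= ln (/ Z) <= hi -> - hi <= ln Z <= - lo.
Proof. intros HZ H. rewrite ln_Rinv in H by lra. lra. Qed.

Lemma psi_check k d x y M : (3 <= k)%nat -> 0 < x <= 1/2 -> 1 <= d -> y < 1/2 ->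
  (d - 1) * ln (Psi_hat k x) <= M -> M < ln ((1 - 2*y)/(1 - y)) -> y < Psi k d x.
Proof.
  intros Hk Hx Hd Hy HM HMy.
  apply Psi_gt_crit; auto; try lra.
  assert (HW : Wf k d x < (1 - 2*y)/(1 - y)).
  { unfold Wf, Rpower. rewrite <- (exp_ln ((1 - 2*y)/(1 - y))).
    apply exp_increasing. lra. apply Rdiv_lt_0_compat; lra. }
  apply (Rmult_lt_compat_r (1 - y)) in HW; [|lra].
  replace ((1 - 2*y)/(1 - y) * (1 - y)) with (1 - 2*y) in HW by (field; lra). exact HW.
Qed.

Lemma v_anti k x y : (3 <= k)%nat -> 0 < x <= y -> y <= 1/2 -> Psi_hat k y <= Psi_hat k x.
Proof.
  intros Hk Hxy Hy. pose proof (t_bounds k x Hk ltac:(lra)). pose proof (t_bounds k y Hk ltac:(lra)).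
  assert (x^(k-1) <= y^(k-1)) by (apply pow_incr; lra).
  unfold Psi_hat. set (tx := x^(k-1)) in *. set (ty := y^(k-1)) in *.
  replace ((1 - 2*ty)/(1-ty)) with (2 - /(1-ty)) by (field; lra).
  replace ((1 - 2*tx)/(1-tx)) with (2 - /(1-tx)) by (field; lra).
  assert (/(1-tx) <= /(1-ty)) by (apply Rinv_le_contravar; lra). lra.
Qed.

Lemma zexp_dec (z0 z : R) : 1 <= z0 <= z -> z * exp (- z) <= z0 * exp (- z0).
Proof.
  intros Hz. 
  assert (E : exp (-z0) = exp (-z) * exp (z - z0)) by (rewrite <- exp_plus; f_equal; ring).
  rewrite E. pose proof (exp_ineq1_le (z - z0)). pose proof (exp_pos (-z)).
  assert (z <= z0 * (1 + (z - z0))) by nra.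
  assert (z0 * (1 + (z - z0)) <= z0 * exp (z - z0)) by (apply Rmult_le_compat_l; lra).
  nra.
Qed.

Lemma exp_neg_le (M0 Wb : R) : 0 <= M0 ->
  1 <= Wb * (1 + M0/4 + (M0/4)^2/2 + (M0/4)^3/6 + (M0/4)^4/24)^4 -> exp (- M0) <= Wb.
Proof.
  intros HM HW. pose proof (exp_ge_poly4 (M0/4) ltac:(lra)) as He.
  assert (exp M0 = (exp (M0/4))^4).
  { replace M0 with (M0/4 + M0/4 + M0/4 + M0/4) at 1 by field. rewrite !exp_plus. simpl. ring. }
  set (P := 1 + M0/4 + (M0/4)^2/2 + (M0/4)^3/6 + (M0/4)^4/24) in *.
  assert (1 <= P) by (unfold P; assert (0 <= M0/4) by lra; pose proof (pow_le (M0/4) 2); pose proof (pow_le (M0/4) 3); pose proof (pow_le (M0/4) 4); nra).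
  assert (P^4 <= exp M0) by (rewrite H; apply pow_incr; lra).
  rewrite exp_Ropp. assert (0 < exp M0) by apply exp_pos.
  apply (Rmult_le_reg_r (exp M0)). auto. rewrite Rinv_l by lra.
  assert (0 <= Wb). { destruct (Rle_or_lt 0 Wb); auto. assert (0 < P^4) by (apply pow_lt; lra). nra. }
  nra.
Qed.

Lemma ln_mono (a b : R) : 0 < a -> a <= b -> ln a <= ln b.
Proof. intros Ha Hab. destruct (Req_dec a b) as [->|]. lra. left. apply ln_increasing; lra. Qed.

Lemma dec_piece k dl xl xr m M0 Wb : (3 <= k)%nat -> 1 <= dl -> 0 < xl -> xl < xr -> xr <= 1/2 ->
  0 < m -> ln (Psi_hat k xl) <= - m -> 1 <= M0 -> M0 <= (dl - 1) * m ->
  exp (- M0) <= Wb -> Wb < 2 ->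
  (M0 * Wb / m) * (INR k - 1) * xr^(k-2) < (1 - xr^(k-1))^2 * Psi_hat k xr * (2 - Wb)^2 ->
  forall d, dl <= d -> forall x y, xl <= x -> x < y -> y <= xr -> Psi k d y - y < Psi k d x - x.
Proof.
  intros Hk Hdl Hxl Hlr Hxr Hm Hlnv HM0 HM0' HWb HWb2 HC d Hd x y Hx Hxy Hy.
  pose proof (dec_core k d x y Hk ltac:(lra) ltac:(lra) Hxy ltac:(lra)) as Hc.
  pose proof (v_bounds k x Hk ltac:(lra)) as Hvx. pose proof (v_bounds k y Hk ltac:(lra)) as Hvy.
  pose proof (v_bounds k xl Hk ltac:(lra)) as Hvl.
  assert (Hlx : ln (Psi_hat k x) <= - m).
  { eapply Rle_trans; [|exact Hlnv]. apply ln_mono. lra. apply v_anti; try exact Hk; lra. }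
  assert (Hly : ln (Psi_hat k y) <= - m).
  { eapply Rle_trans; [|exact Hlnv]. apply ln_mono. lra. apply v_anti; try exact Hk; lra. }
  set (z := (d-1)*m).
  assert (Hz : M0 <= z) by (unfold z; nra).
  assert (Hwx : Wf k d x <= exp (- z)).
  { unfold Wf, Rpower, z. apply exp_mono_le. nra. }
  assert (Hwy : Wf k d y <= exp (- z)).
  { unfold Wf, Rpower, z. apply exp_mono_le. nra. }
  assert (Hez : exp (-z) <= exp (-M0)) by (apply exp_mono_le; lra).
  assert (HB : (d-1) * Wf k d x <= M0 * Wb / m).
  { assert ((d-1) * Wf k d x <= (d-1) * exp (-z)) by (apply Rmult_le_compat_l; lra).
    assert ((d-1) * exp (-z) = z * exp (-z) / m) by (unfold z; field; lra).
    pose proof (zexp_dec M0 z ltac:(lra)).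
    assert (z * exp (-z) / m <= M0 * exp (-M0) / m) by (apply Rmult_le_compat_r; [left; apply Rinv_0_lt_compat; lra| lra]).
    assert (M0 * exp (-M0) / m <= M0 * Wb / m).
    { apply Rmult_le_compat_r. left; apply Rinv_0_lt_compat; lra. apply Rmult_le_compat_l; lra. }
    lra. }
  pose proof (W_pos k d x). pose proof (W_pos k d y).
  pose proof (t_bounds k x Hk ltac:(lra)) as Htx. pose proof (t_bounds k y Hk ltac:(lra)) as Hty.
  pose proof (t_bounds k xr Hk ltac:(lra)) as Htr.
  assert (Hxy' : x^(k-1) <= y^(k-1)) by (apply pow_incr; lra).
  assert (Hyr : y^(k-1) <= xr^(k-1)) by (apply pow_incr; lra).
  assert (Hdiff : y^(k-1) - x^(k-1) <= (INR k - 1) * xr^(k-2) * (y - x)).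
  { replace (k-1)%nat with (S (k-2)) by lia.
    pose proof (pow_diff_le x y (k-2) ltac:(lra)) as H2.
    rewrite S_INR, minus_INR in H2 by lia. replace (INR 2) with 2 in H2 by reflexivity.
    assert (y^(k-2) <= xr^(k-2)) by (apply pow_incr; lra).
    assert (0 <= y^(k-2)) by (apply pow_le; lra).
    assert (2 < INR k) by (replace 2 with (INR 2) by reflexivity; apply lt_INR; lia).
    assert ((INR k - 2 + 1) * y^(k-2) * (y - x) <= (INR k - 1) * xr^(k-2) * (y - x)).
    { replace (INR k - 2 + 1) with (INR k - 1) by ring. apply Rmult_le_compat_r. lra.
      apply Rmult_le_compat_l; lra. }
    lra. }
  assert (Hvr : Psi_hat k xr <= Psi_hat k y) by (apply v_anti; try exact Hk; lra).
  pose proof (v_bounds k xr Hk ltac:(lra)) as Hvr'.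
  set (tx := x^(k-1)) in *. set (ty := y^(k-1)) in *. set (tr := xr^(k-1)) in *.
  set (wx := Wf k d x) in *. set (wy := Wf k d y) in *.
  set (N := (d - 1) * wx * (ty - tx)).
  set (Dn := (1 - tx) * (1 - ty) * Psi_hat k y * ((2 - wx) * (2 - wy))).
  assert (HN : N <= (M0 * Wb / m) * ((INR k - 1) * xr^(k-2) * (y - x))).
  { unfold N. apply Rmult_le_compat; try lra.
    assert (0 <= d - 1) by lra. nra. }
  assert (HD : (1 - tr)^2 * Psi_hat k xr * (2 - Wb)^2 <= Dn).
  { unfold Dn.
    assert ((1-tr)^2 <= (1 - tx) * (1 - ty)) by nra.
    assert ((2-Wb)^2 <= (2 - wx) * (2 - wy)) by nra.
    assert ((1-tr)^2 * Psi_hat k xr <= (1 - tx) * (1 - ty) * Psi_hat k y) by (apply Rmult_le_compat; nra).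
    apply Rmult_le_compat; nra. }
  assert (HDpos : 0 < (1 - tr)^2 * Psi_hat k xr * (2 - Wb)^2).
  { apply Rmult_lt_0_compat. apply Rmult_lt_0_compat. nra. lra. nra. }
  assert (Psi k d y - Psi k d x <= N / Dn) by (unfold N, Dn; exact Hc).
  assert (N / Dn < y - x).
  { apply (Rmult_lt_reg_r Dn). lra. unfold Rdiv. rewrite Rmult_assoc, Rinv_l by lra.
    assert ((M0 * Wb / m) * ((INR k - 1) * xr^(k-2) * (y - x)) < (1 - tr)^2 * Psi_hat k xr * (2 - Wb)^2 * (y - x)).
    { replace ((M0 * Wb / m) * ((INR k - 1) * xr^(k-2) * (y - x))) with (((M0 * Wb / m) * (INR k - 1) * xr^(k-2)) * (y - x)) by ring.
      apply Rmult_lt_compat_r; lra. }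
    assert ((y - x) * ((1 - tr)^2 * Psi_hat k xr * (2 - Wb)^2) <= (y - x) * Dn) by (apply Rmult_le_compat_l; lra).
    lra. }
  lra.
Qed.

Lemma dec_glue (f : R -> R) (p q r : R) :
  (forall x y, p <= x -> x < y -> y <= q -> f y < f x) ->
  (forall x y, q <= x -> x < y -> y <= r -> f y < f x) ->
  forall x y, p <= x -> x < y -> y <= r -> f y < f x.
Proof.
  intros H1 H2 x y Hx Hxy Hy.
  destruct (Rle_or_lt y q) as [Hyq|Hyq]. apply H1; lra.
  destruct (Rle_or_lt q x) as [Hqx|Hqx]. apply H2; lra.
  assert (f q < f x) by (apply H1; lra). assert (f y < f q) by (apply H2; lra). lra.
Qed.

Lemma Phi_repr2 k d x : (3 <= k)%nat -> d <> 0 ->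
  Phi k d x = - ln (1 - x) - (d * (1 - / INR k) - 1) * ln (1 - 2 * x^k) + (d - 1) * ln (1 - x^(k-1)).
Proof.
  intros Hk Hd. unfold Phi. assert (INR k <> 0) by (apply not_0_INR; lia).
  replace (d * (1 - / INR k - / d)) with (d * (1 - / INR k) - 1) by (field; auto). ring.
Qed.

Lemma ln_diff_ge (A B : R) : 0 < A -> 0 < B -> (A - B) / A <= ln A - ln B.
Proof.
  intros HA HB. pose proof (ln_le_sub1 (B/A) ltac:(apply Rdiv_lt_0_compat; lra)).
  unfold Rdiv in H. rewrite ln_mult, ln_Rinv in H by (try apply Rinv_0_lt_compat; lra).
  replace ((A - B)/A) with (1 - B * /A) by (field; lra). lra.
Qed.

Lemma phi_inc_piece k d xl xr : (3 <= k)%nat -> 1 <= d -> 0 < xl -> xl < xr -> xr <= 1/2 ->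
  0 <= d * (1 - / INR k) - 1 ->
  (d - 1) * (INR k - 1) * xr^(k-2) / (1 - xr^(k-1)) <
    1 / (1 - xl) + (d * (1 - / INR k) - 1) * (2 * INR k * xl^(k-1)) / (1 - 2 * xl^k) ->
  forall x y, xl <= x -> x < y -> y <= xr -> Phi k d x < Phi k d y.
Proof.
  intros Hk Hd Hxl Hlr Hxr HD HC x y Hx Hxy Hy.
  rewrite !Phi_repr2 by (auto; lra).
  set (D' := d * (1 - / INR k) - 1) in *.
  pose proof (t_bounds k x Hk ltac:(lra)) as Htx. pose proof (t_bounds k y Hk ltac:(lra)) as Hty.
  pose proof (t_bounds k xr Hk ltac:(lra)) as Htr.
  pose proof (xk_bound k x Hk ltac:(lra)). pose proof (xk_bound k y Hk ltac:(lra)).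
  pose proof (xk_bound k xl Hk ltac:(lra)).
  assert (2 < INR k) by (replace 2 with (INR 2) by reflexivity; apply lt_INR; lia).
  pose proof (ln_diff_ge (1 - x) (1 - y) ltac:(lra) ltac:(lra)) as T1.
  assert (T1' : (y - x) / (1 - xl) <= (1 - x - (1 - y)) / (1 - x)).
  { replace (1 - x - (1 - y)) with (y - x) by ring.
    apply Rmult_le_compat_l. lra. apply Rinv_le_contravar; lra. }
  pose proof (ln_diff_ge (1 - 2*x^k) (1 - 2*y^k) ltac:(lra) ltac:(lra)) as T2.
  assert (Hk1 : k = S (k-1)) by lia.
  assert (Hpk : INR k * x^(k-1) * (y - x) <= y^k - x^k).
  { rewrite Hk1 at 1 3 4. replace (S (k-1) - 1)%nat with (k-1)%nat by lia.
    apply pow_diff_ge. lra. }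
  assert (Hxlx : xl^(k-1) <= x^(k-1)) by (apply pow_incr; lra).
  assert (Hxlk : xl^k <= x^k) by (apply pow_incr; lra).
  assert (T2' : (2 * INR k * xl^(k-1)) / (1 - 2 * xl^k) * (y - x) <= (1 - 2*x^k - (1 - 2*y^k)) / (1 - 2*x^k)).
  { replace (1 - 2*x^k - (1 - 2*y^k)) with (2 * (y^k - x^k)) by ring.
    apply Rle_trans with ((2 * INR k * x^(k-1) * (y - x)) / (1 - 2 * x^k)).
    - replace ((2 * INR k * xl^(k-1)) / (1 - 2 * xl^k) * (y - x)) with ((2 * INR k * xl^(k-1) * (y - x)) / (1 - 2 * xl^k)) by (field; lra).
      apply Rle_trans with ((2 * INR k * xl^(k-1) * (y - x)) / (1 - 2 * x^k)).
      apply Rmult_le_compat_l. assert (0 <= xl^(k-1)) by (apply pow_le; lra). repeat apply Rmult_le_pos; lra.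
      apply Rinv_le_contravar; lra.
      apply Rmult_le_compat_r. left; apply Rinv_0_lt_compat; lra.
      apply Rmult_le_compat_r. lra. apply Rmult_le_compat_l; lra.
    - apply Rmult_le_compat_r. left; apply Rinv_0_lt_compat; lra. lra. }
  pose proof (ln_diff_ge (1 - y^(k-1)) (1 - x^(k-1)) ltac:(lra) ltac:(lra)) as T3.
  assert (Hdiff : y^(k-1) - x^(k-1) <= (INR k - 1) * xr^(k-2) * (y - x)).
  { replace (k-1)%nat with (S (k-2)) by lia.
    pose proof (pow_diff_le x y (k-2) ltac:(lra)) as HH2.
    rewrite S_INR, minus_INR in HH2 by lia. replace (INR 2) with 2 in HH2 by reflexivity.
    assert (y^(k-2) <= xr^(k-2)) by (apply pow_incr; lra).
    assert (0 <= y^(k-2)) by (apply pow_le; lra).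
    assert ((INR k - 2 + 1) * y^(k-2) * (y - x) <= (INR k - 1) * xr^(k-2) * (y - x)).
    { replace (INR k - 2 + 1) with (INR k - 1) by ring. apply Rmult_le_compat_r. lra.
      apply Rmult_le_compat_l; lra. }
    lra. }
  assert (Hyr : y^(k-1) <= xr^(k-1)) by (apply pow_incr; lra).
  assert (T3' : (1 - y^(k-1) - (1 - x^(k-1))) / (1 - y^(k-1)) >= - ((INR k - 1) * xr^(k-2) / (1 - xr^(k-1))) * (y - x)).
  { replace (1 - y^(k-1) - (1 - x^(k-1))) with (- (y^(k-1) - x^(k-1))) by ring.
    assert (Hx' : x^(k-1) <= y^(k-1)) by (apply pow_incr; lra).
    assert ((y^(k-1) - x^(k-1)) / (1 - y^(k-1)) <= (INR k - 1) * xr^(k-2) * (y - x) / (1 - xr^(k-1))).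
    { apply Rle_trans with ((INR k - 1) * xr^(k-2) * (y - x) / (1 - y^(k-1))).
      apply Rmult_le_compat_r. left; apply Rinv_0_lt_compat; lra. lra.
      apply Rmult_le_compat_l. assert (0 <= xr^(k-2)) by (apply pow_le; lra). nra.
      apply Rinv_le_contravar; lra. }
    replace (- (y^(k-1) - x^(k-1)) / (1 - y^(k-1))) with (- ((y^(k-1) - x^(k-1)) / (1 - y^(k-1)))) by (field; lra).
    replace (- ((INR k - 1) * xr^(k-2) / (1 - xr^(k-1))) * (y - x)) with (- ((INR k - 1) * xr^(k-2) * (y - x) / (1 - xr^(k-1)))) by (field; lra).
    lra. }
  assert (S2 : D' * ((2 * INR k * xl^(k-1)) / (1 - 2 * xl^k) * (y - x)) <= D' * (ln (1 - 2*x^k) - ln (1 - 2*y^k))).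
  { apply Rmult_le_compat_l; lra. }
  assert (S3 : (d - 1) * (- ((INR k - 1) * xr^(k-2) / (1 - xr^(k-1))) * (y - x)) <= (d - 1) * (ln (1 - y^(k-1)) - ln (1 - x^(k-1)))).
  { apply Rmult_le_compat_l; lra. }
  assert (Hfin : 0 < (y - x) * (1 / (1 - xl) + D' * (2 * INR k * xl^(k-1)) / (1 - 2 * xl^k) - (d - 1) * (INR k - 1) * xr^(k-2) / (1 - xr^(k-1)))).
  { apply Rmult_lt_0_compat; lra. }
  assert (E1 : (y - x) / (1 - xl) = (y - x) * (1 / (1 - xl))) by (field; lra).
  assert (E2 : D' * ((2 * INR k * xl^(k-1)) / (1 - 2 * xl^k) * (y - x)) = (y - x) * (D' * (2 * INR k * xl^(k-1)) / (1 - 2 * xl^k))) by (field; lra).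
  assert (E3 : (d - 1) * (- ((INR k - 1) * xr^(k-2) / (1 - xr^(k-1))) * (y - x)) = - ((y - x) * ((d - 1) * (INR k - 1) * xr^(k-2) / (1 - xr^(k-1))))) by (field; lra).
  lra.
Qed.

Lemma inc_glue (f : R -> R) (p q r : R) :
  (forall x y, p <= x -> x < y -> y <= q -> f x < f y) ->
  (forall x y, q <= x -> x < y -> y <= r -> f x < f y) ->
  forall x y, p <= x -> x < y -> y <= r -> f x < f y.
Proof.
  intros H1 H2 x y Hx Hxy Hy.
  destruct (Rle_or_lt y q) as [Hyq|Hyq]. apply H1; lra.
  destruct (Rle_or_lt q x) as [Hqx|Hqx]. apply H2; lra.
  assert (f x < f q) by (apply H1; lra). assert (f q < f y) by (apply H2; lra). lra.
Qed.

Lemma prod_ub (a b alo bhi : R) : 0 <= alo <= a -> b <= bhi <= 0 -> a * b <= alo * bhi.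
Proof. intros. nra. Qed.
Lemma prod_lb (a b ahi blo : R) : 0 <= a <= ahi -> blo <= b <= 0 -> ahi * blo <= a * b.
Proof. intros. nra. Qed.

Lemma ln_inv_range (Z Zi lo hi : R) : 0 < Z -> Z * Zi = 1 -> lo <= ln Zi <= hi -> - hi <= ln Z <= - lo.
Proof.
  intros HZ HE H. replace Zi with (/ Z) in H by (field_simplify_eq; [lra| lra]).
  rewrite ln_Rinv in H by lra. lra.
Qed.

Lemma lnr_a' (Z : R) (j : nat) (jr lo hi : R) : INR j = jr -> 2^j <= Z ->
  lo <= lnlo ((Z/2^j - 1)/(Z/2^j + 1)) + jr * 0.693147 ->
  lnhi ((Z/2^j - 1)/(Z/2^j + 1)) + jr * 0.6931472 <= hi ->
  lo <= ln Z <= hi.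
Proof. intros <-. apply lnr_a. Qed.

Lemma lnr_b' (Z : R) (j : nat) (jr lo hi : R) : INR j = jr -> 0 < Z <= 2^j ->
  lo <= - lnhi ((2^j/Z - 1)/(2^j/Z + 1)) + jr * 0.693147 ->
  - lnlo ((2^j/Z - 1)/(2^j/Z + 1)) + jr * 0.6931472 <= hi ->
  lo <= ln Z <= hi.
Proof. intros <-. apply lnr_b. Qed.

Lemma k3_aa : aa 3 = (3/8).
Proof. unfold aa. simpl. lra. Qed.

Lemma k3_dl : (337/50) <= d_lbd 3 <= (337/50).
Proof. unfold d_lbd. lra. Qed.

Lemma k3_du : (15/2) <= d_ubd 3 <= (15/2).
Proof. unfold d_ubd. lra. Qed.

Lemma k3_hex : aa 3 < Psi 3 (d_lbd 3) (aa 3).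
Proof.
  pose proof k3_dl as Hd. rewrite k3_aa.
  assert (HV : - (22336473593/125000000000) <= ln (46/55) <= - (22336473583/125000000000)) by (apply (ln_inv_range (46/55) (55/46)); [lra | lra | apply (lnr_a' (55/46) 0%nat 0 (22336473583/125000000000) (22336473593/125000000000)); [simpl; lra | lra | unfold lnlo; lra | unfold lnhi, lnlo; lra]]).
  assert (EHV : Psi_hat 3 (3/8) = (46/55)) by (unfold Psi_hat; simpl; field).
  rewrite <- EHV in HV.
  assert (HY : - (229072687829/250000000000) <= ln (2/5) <= - (458145275367/500000000000)) by (apply (ln_inv_range (2/5) (5/2)); [lra | lra | apply (lnr_a' (5/2) 1%nat 1 (458145275367/500000000000) (229072687829/250000000000)); [simpl; lra | lra | unfold lnlo; lra | unfold lnhi, lnlo; lra]]).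
  assert (EHY : (1 - 2 * (3/8)) / (1 - (3/8)) = (2/5)) by (simpl; field).
  rewrite <- EHY in HY.
  apply (psi_check 3 (d_lbd 3) (3/8) (3/8) (((337/50) - 1) * ((-22336473583/125000000000)))); [lia | lra | lra | lra | apply prod_ub; lra | lra].
Qed.

Lemma k3_dec : forall d, in_d_interval 3 d -> forall x y, aa 3 <= x -> x < y -> y <= 1/2 -> Psi 3 d y - y < Psi 3 d x - x.
Proof.
  intros d Hd. unfold in_d_interval in Hd. pose proof k3_dl as Hdl. rewrite k3_aa.
  assert (P0 : forall x y, (3/8) <= x -> x < y -> y <= (37/96) -> Psi 3 d y - y < Psi 3 d x - x).
  {
  assert (HV0 : - (22336473593/125000000000) <= ln (46/55) <= - (22336473583/125000000000)) by (apply (ln_inv_range (46/55) (55/46)); [lra | lra | apply (lnr_a' (55/46) 0%nat 0 (22336473583/125000000000) (22336473593/125000000000)); [simpl; lra | lra | unfold lnlo; lra | unfold lnhi, lnlo; lra]]).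
  assert (EHV0 : Psi_hat 3 (3/8) = (46/55)) by (unfold Psi_hat; simpl; field).
  rewrite <- EHV0 in HV0.
  exact (dec_piece 3 (d_lbd 3) (3/8) (37/96) (22336473583/125000000000) (641/625) (5603/15625) ltac:(lia) ltac:(lra) ltac:(lra) ltac:(lra) ltac:(lra) ltac:(lra) ltac:(lra) ltac:(lra) ltac:(lra) ltac:(apply exp_neg_le; lra) ltac:(lra) ltac:(unfold Psi_hat; simpl; lra) d ltac:(lra)).
  }
  assert (P1 : forall x y, (37/96) <= x -> x < y -> y <= (19/48) -> Psi 3 d y - y < Psi 3 d x - x).
  {
  assert (HV1 : - (191719472397/1000000000000) <= ln (6478/7847) <= - (191719472247/1000000000000)) by (apply (ln_inv_range (6478/7847) (7847/6478)); [lra | lra | apply (lnr_a' (7847/6478) 0%nat 0 (191719472247/1000000000000) (191719472397/1000000000000)); [simpl; lra | lra | unfold lnlo; lra | unfold lnhi, lnlo; lra]]).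
  assert (EHV1 : Psi_hat 3 (37/96) = (6478/7847)) by (unfold Psi_hat; simpl; field).
  rewrite <- EHV1 in HV1.
  exact (dec_piece 3 (d_lbd 3) (37/96) (19/48) (191719472247/1000000000000) (2751/2500) (20797/62500) ltac:(lia) ltac:(lra) ltac:(lra) ltac:(lra) ltac:(lra) ltac:(lra) ltac:(lra) ltac:(lra) ltac:(lra) ltac:(apply exp_neg_le; lra) ltac:(lra) ltac:(unfold Psi_hat; simpl; lra) d ltac:(lra)).
  }
  assert (P2 : forall x y, (19/48) <= x -> x < y -> y <= (13/32) -> Psi 3 d y - y < Psi 3 d x - x).
  {
  assert (HV2 : - (205543301051/1000000000000) <= ln (1582/1943) <= - (51385825193/250000000000)) by (apply (ln_inv_range (1582/1943) (1943/1582)); [lra | lra | apply (lnr_a' (1943/1582) 0%nat 0 (51385825193/250000000000) (205543301051/1000000000000)); [simpl; lra | lra | unfold lnlo; lra | unfold lnhi, lnlo; lra]]).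
  assert (EHV2 : Psi_hat 3 (19/48) = (1582/1943)) by (unfold Psi_hat; simpl; field).
  rewrite <- EHV2 in HV2.
  exact (dec_piece 3 (d_lbd 3) (19/48) (13/32) (51385825193/250000000000) (5899/5000) (307359/1000000) ltac:(lia) ltac:(lra) ltac:(lra) ltac:(lra) ltac:(lra) ltac:(lra) ltac:(lra) ltac:(lra) ltac:(lra) ltac:(apply exp_neg_le; lra) ltac:(lra) ltac:(unfold Psi_hat; simpl; lra) d ltac:(lra)).
  }
  assert (P3 : forall x y, (13/32) <= x -> x < y -> y <= (5/12) -> Psi 3 d y - y < Psi 3 d x - x).
  {
  assert (HV3 : - (220223841213/1000000000000) <= ln (686/855) <= - (44044768139/200000000000)) by (apply (ln_inv_range (686/855) (855/686)); [lra | lra | apply (lnr_a' (855/686) 0%nat 0 (44044768139/200000000000) (220223841213/1000000000000)); [simpl; lra | lra | unfold lnlo; lra | unfold lnhi, lnlo; lra]]).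
  assert (EHV3 : Psi_hat 3 (13/32) = (686/855)) by (unfold Psi_hat; simpl; field).
  rewrite <- EHV3 in HV3.
  exact (dec_piece 3 (d_lbd 3) (13/32) (5/12) (44044768139/200000000000) (158/125) (56509/200000) ltac:(lia) ltac:(lra) ltac:(lra) ltac:(lra) ltac:(lra) ltac:(lra) ltac:(lra) ltac:(lra) ltac:(lra) ltac:(apply exp_neg_le; lra) ltac:(lra) ltac:(unfold Psi_hat; simpl; lra) d ltac:(lra)).
  }
  assert (P4 : forall x y, (5/12) <= x -> x < y -> y <= (41/96) -> Psi 3 d y - y < Psi 3 d x - x).
  {
  assert (HV4 : - (58957177711/250000000000) <= ln (94/119) <= - (235828709891/1000000000000)) by (apply (ln_inv_range (94/119) (119/94)); [lra | lra | apply (lnr_a' (119/94) 0%nat 0 (235828709891/1000000000000) (58957177711/250000000000)); [simpl; lra | lra | unfold lnlo; lra | unfold lnhi, lnlo; lra]]).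
  assert (EHV4 : Psi_hat 3 (5/12) = (94/119)) by (unfold Psi_hat; simpl; field).
  rewrite <- EHV4 in HV4.
  exact (dec_piece 3 (d_lbd 3) (5/12) (41/96) (235828709891/1000000000000) (846/625) (129169/500000) ltac:(lia) ltac:(lra) ltac:(lra) ltac:(lra) ltac:(lra) ltac:(lra) ltac:(lra) ltac:(lra) ltac:(lra) ltac:(apply exp_neg_le; lra) ltac:(lra) ltac:(unfold Psi_hat; simpl; lra) d ltac:(lra)).
  }
  assert (P5 : forall x y, (41/96) <= x -> x < y -> y <= (7/16) -> Psi 3 d y - y < Psi 3 d x - x).
  {
  assert (HV5 : - (126216821907/500000000000) <= ln (5854/7535) <= - (252433642063/1000000000000)) by (apply (ln_inv_range (5854/7535) (7535/5854)); [lra | lra | apply (lnr_a' (7535/5854) 0%nat 0 (252433642063/1000000000000) (126216821907/500000000000)); [simpl; lra | lra | unfold lnlo; lra | unfold lnhi, lnlo; lra]]).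
  assert (EHV5 : Psi_hat 3 (41/96) = (5854/7535)) by (unfold Psi_hat; simpl; field).
  rewrite <- EHV5 in HV5.
  exact (dec_piece 3 (d_lbd 3) (41/96) (7/16) (252433642063/1000000000000) (14489/10000) (46973/200000) ltac:(lia) ltac:(lra) ltac:(lra) ltac:(lra) ltac:(lra) ltac:(lra) ltac:(lra) ltac:(lra) ltac:(lra) ltac:(apply exp_neg_le; lra) ltac:(lra) ltac:(unfold Psi_hat; simpl; lra) d ltac:(lra)).
  }
  assert (P6 : forall x y, (7/16) <= x -> x < y -> y <= (43/96) -> Psi 3 d y - y < Psi 3 d x - x).
  {
  assert (HV6 : - (1080495041/4000000000) <= ln (158/207) <= - (67530939261/250000000000)) by (apply (ln_inv_range (158/207) (207/158)); [lra | lra | apply (lnr_a' (207/158) 0%nat 0 (67530939261/250000000000) (1080495041/4000000000)); [simpl; lra | lra | unfold lnlo; lra | unfold lnhi, lnlo; lra]]).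
  assert (EHV6 : Psi_hat 3 (7/16) = (158/207)) by (unfold Psi_hat; simpl; field).
  rewrite <- EHV6 in HV6.
  exact (dec_piece 3 (d_lbd 3) (7/16) (43/96) (67530939261/250000000000) (3101/2000) (212187/1000000) ltac:(lia) ltac:(lra) ltac:(lra) ltac:(lra) ltac:(lra) ltac:(lra) ltac:(lra) ltac:(lra) ltac:(lra) ltac:(apply exp_neg_le; lra) ltac:(lra) ltac:(unfold Psi_hat; simpl; lra) d ltac:(lra)).
  }
  assert (P7 : forall x y, (43/96) <= x -> x < y -> y <= (11/24) -> Psi 3 d y - y < Psi 3 d x - x).
  {
  assert (HV7 : - (36124386491/125000000000) <= ln (5518/7367) <= - (288995086073/1000000000000)) by (apply (ln_inv_range (5518/7367) (7367/5518)); [lra | lra | apply (lnr_a' (7367/5518) 0%nat 0 (288995086073/1000000000000) (36124386491/125000000000)); [simpl; lra | lra | unfold lnlo; lra | unfold lnhi, lnlo; lra]]).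
  assert (EHV7 : Psi_hat 3 (43/96) = (5518/7367)) by (unfold Psi_hat; simpl; field).
  rewrite <- EHV7 in HV7.
  exact (dec_piece 3 (d_lbd 3) (43/96) (11/24) (288995086073/1000000000000) (4147/2500) (190423/1000000) ltac:(lia) ltac:(lra) ltac:(lra) ltac:(lra) ltac:(lra) ltac:(lra) ltac:(lra) ltac:(lra) ltac:(lra) ltac:(apply exp_neg_le; lra) ltac:(lra) ltac:(unfold Psi_hat; simpl; lra) d ltac:(lra)).
  }
  assert (P8 : forall x y, (11/24) <= x -> x < y -> y <= (15/32) -> Psi 3 d y - y < Psi 3 d x - x).
  {
  assert (HV8 : - (309156426021/1000000000000) <= ln (334/455) <= - (154578207671/500000000000)) by (apply (ln_inv_range (334/455) (455/334)); [lra | lra | apply (lnr_a' (455/334) 0%nat 0 (154578207671/500000000000) (309156426021/1000000000000)); [simpl; lra | lra | unfold lnlo; lra | unfold lnhi, lnlo; lra]]).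
  assert (EHV8 : Psi_hat 3 (11/24) = (334/455)) by (unfold Psi_hat; simpl; field).
  rewrite <- EHV8 in HV8.
  exact (dec_piece 3 (d_lbd 3) (11/24) (15/32) (154578207671/500000000000) (3549/2000) (42409/250000) ltac:(lia) ltac:(lra) ltac:(lra) ltac:(lra) ltac:(lra) ltac:(lra) ltac:(lra) ltac:(lra) ltac:(lra) ltac:(apply exp_neg_le; lra) ltac:(lra) ltac:(unfold Psi_hat; simpl; lra) d ltac:(lra)).
  }
  assert (P9 : forall x y, (15/32) <= x -> x < y -> y <= (23/48) -> Psi 3 d y - y < Psi 3 d x - x).
  {
  assert (HV9 : - (41341443693/125000000000) <= ln (574/799) <= - (2067072063/6250000000)) by (apply (ln_inv_range (574/799) (799/574)); [lra | lra | apply (lnr_a' (799/574) 0%nat 0 (2067072063/6250000000) (41341443693/125000000000)); [simpl; lra | lra | unfold lnlo; lra | unfold lnhi, lnlo; lra]]).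
  assert (EHV9 : Psi_hat 3 (15/32) = (574/799)) by (unfold Psi_hat; simpl; field).
  rewrite <- EHV9 in HV9.
  exact (dec_piece 3 (d_lbd 3) (15/32) (23/48) (2067072063/6250000000) (18983/10000) (29981/200000) ltac:(lia) ltac:(lra) ltac:(lra) ltac:(lra) ltac:(lra) ltac:(lra) ltac:(lra) ltac:(lra) ltac:(lra) ltac:(apply exp_neg_le; lra) ltac:(lra) ltac:(unfold Psi_hat; simpl; lra) d ltac:(lra)).
  }
  assert (P10 : forall x y, (23/48) <= x -> x < y -> y <= (47/96) -> Psi 3 d y - y < Psi 3 d x - x).
  {
  assert (HV10 : - (176931023149/500000000000) <= ln (1246/1775) <= - (176930910937/500000000000)) by (apply (ln_inv_range (1246/1775) (1775/1246)); [lra | lra | apply (lnr_b' (1775/1246) 1%nat 1 (176930910937/500000000000) (176931023149/500000000000)); [simpl; lra | lra | unfold lnhi, lnlo; lra | unfold lnlo; lra]]).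
  assert (EHV10 : Psi_hat 3 (23/48) = (1246/1775)) by (unfold Psi_hat; simpl; field).
  rewrite <- EHV10 in HV10.
  exact (dec_piece 3 (d_lbd 3) (23/48) (47/96) (176930910937/500000000000) (20311/10000) (131289/1000000) ltac:(lia) ltac:(lra) ltac:(lra) ltac:(lra) ltac:(lra) ltac:(lra) ltac:(lra) ltac:(lra) ltac:(lra) ltac:(apply exp_neg_le; lra) ltac:(lra) ltac:(unfold Psi_hat; simpl; lra) d ltac:(lra)).
  }
  assert (P11 : forall x y, (47/96) <= x -> x < y -> y <= (1/2) -> Psi 3 d y - y < Psi 3 d x - x).
  {
  assert (HV11 : - (94677629193/250000000000) <= ln (4798/7007) <= - (75742060871/200000000000)) by (apply (ln_inv_range (4798/7007) (7007/4798)); [lra | lra | apply (lnr_b' (7007/4798) 1%nat 1 (75742060871/200000000000) (94677629193/250000000000)); [simpl; lra | lra | unfold lnhi, lnlo; lra | unfold lnlo; lra]]).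
  assert (EHV11 : Psi_hat 3 (47/96) = (4798/7007)) by (unfold Psi_hat; simpl; field).
  rewrite <- EHV11 in HV11.
  exact (dec_piece 3 (d_lbd 3) (47/96) (1/2) (75742060871/200000000000) (21737/10000) (113871/1000000) ltac:(lia) ltac:(lra) ltac:(lra) ltac:(lra) ltac:(lra) ltac:(lra) ltac:(lra) ltac:(lra) ltac:(lra) ltac:(apply exp_neg_le; lra) ltac:(lra) ltac:(unfold Psi_hat; simpl; lra) d ltac:(lra)).
  }
  assert (G0 := P0).
  assert (G1 := dec_glue (fun z => Psi 3 d z - z) (3/8) (37/96) (19/48) G0 P1).
  assert (G2 := dec_glue (fun z => Psi 3 d z - z) (3/8) (19/48) (13/32) G1 P2).
  assert (G3 := dec_glue (fun z => Psi 3 d z - z) (3/8) (13/32) (5/12) G2 P3).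
  assert (G4 := dec_glue (fun z => Psi 3 d z - z) (3/8) (5/12) (41/96) G3 P4).
  assert (G5 := dec_glue (fun z => Psi 3 d z - z) (3/8) (41/96) (7/16) G4 P5).
  assert (G6 := dec_glue (fun z => Psi 3 d z - z) (3/8) (7/16) (43/96) G5 P6).
  assert (G7 := dec_glue (fun z => Psi 3 d z - z) (3/8) (43/96) (11/24) G6 P7).
  assert (G8 := dec_glue (fun z => Psi 3 d z - z) (3/8) (11/24) (15/32) G7 P8).
  assert (G9 := dec_glue (fun z => Psi 3 d z - z) (3/8) (15/32) (23/48) G8 P9).
  assert (G10 := dec_glue (fun z => Psi 3 d z - z) (3/8) (23/48) (47/96) G9 P10).
  assert (G11 := dec_glue (fun z => Psi 3 d z - z) (3/8) (47/96) (1/2) G10 P11).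
  exact G11.
Qed.

Lemma k3_sl : exists x0, aa 3 <= x0 <= 1/2 /\ x0 <= Psi 3 (d_lbd 3) x0 /\ forall x, x0 <= x <= 1/2 -> Phi 3 (d_lbd 3) x > 0.
Proof.
  pose proof k3_dl as Hdl. pose proof k3_du as Hdu. pose proof ln2_bounds as HL2.
  rewrite k3_aa. exists (893/2000). split. lra. split.
  {
  assert (HV : - (894860517/3125000000) <= ln (2405102/3202551) <= - (57271072009/200000000000)) by (apply (ln_inv_range (2405102/3202551) (3202551/2405102)); [lra | lra | apply (lnr_a' (3202551/2405102) 0%nat 0 (57271072009/200000000000) (894860517/3125000000)); [simpl; lra | lra | unfold lnlo; lra | unfold lnhi, lnlo; lra]]).
  assert (EHV : Psi_hat 3 (893/2000) = (2405102/3202551)) by (unfold Psi_hat; simpl; field).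
  rewrite <- EHV in HV.
  assert (HY : - (821716478287/500000000000) <= ln (214/1107) <= - (1643432554509/1000000000000)) by (apply (ln_inv_range (214/1107) (1107/214)); [lra | lra | apply (lnr_a' (1107/214) 2%nat 2 (1643432554509/1000000000000) (821716478287/500000000000)); [simpl; lra | lra | unfold lnlo; lra | unfold lnhi, lnlo; lra]]).
  assert (EHY : (1 - 2 * (893/2000)) / (1 - (893/2000)) = (214/1107)) by (simpl; field).
  rewrite <- EHY in HY.
  left. apply (psi_check 3 (d_lbd 3) (893/2000) (893/2000) (((337/50) - 1) * ((-57271072009/200000000000)))); [lia | lra | lra | lra | apply prod_ub; lra | lra].
  }
  assert (HP : Phi 3 (d_lbd 3) (893/2000) > 0).
  { rewrite Phi_repr2 by (try lia; lra).
  assert (HA : - (23659741851/40000000000) <= ln (1107/2000) <= - (591493346273/1000000000000)) by (apply (ln_inv_range (1107/2000) (2000/1107)); [lra | lra | apply (lnr_b' (2000/1107) 1%nat 1 (591493346273/1000000000000) (23659741851/40000000000)); [simpl; lra | lra | unfold lnhi, lnlo; lra | unfold lnlo; lra]]).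
  assert (EHA : 1 - (893/2000) = (1107/2000)) by (simpl; field).
  rewrite <- EHA in HA.
  assert (HB : - (1225324851/6250000000) <= ln (3287878043/4000000000) <= - (196051975977/1000000000000)) by (apply (ln_inv_range (3287878043/4000000000) (4000000000/3287878043)); [lra | lra | apply (lnr_a' (4000000000/3287878043) 0%nat 0 (196051975977/1000000000000) (1225324851/6250000000)); [simpl; lra | lra | unfold lnlo; lra | unfold lnhi, lnlo; lra]]).
  assert (EHB : 1 - 2 * (893/2000) ^ 3 = (3287878043/4000000000)) by (simpl; field).
  rewrite <- EHB in HB.
  assert (HC : - (222346681401/1000000000000) <= ln (3202551/4000000) <= - (111173340419/500000000000)) by (apply (ln_inv_range (3202551/4000000) (4000000/3202551)); [lra | lra | apply (lnr_a' (4000000/3202551) 0%nat 0 (111173340419/500000000000) (222346681401/1000000000000)); [simpl; lra | lra | unfold lnlo; lra | unfold lnhi, lnlo; lra]]).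
  assert (EHC : 1 - (893/2000) ^ (3 - 1) = (3202551/4000000)) by (simpl; field).
  rewrite <- EHC in HC.
    assert (HK : INR 3 = 3) by (simpl; lra). rewrite HK.
    assert (T1 : (d_lbd 3 * (1 - / 3) - 1) * ln (1 - 2 * (893/2000) ^ 3) <= (262/75) * (-196051975977/1000000000000)) by (apply prod_ub; lra).
    assert (T2 : ((337/50) - 1) * (-222346681401/1000000000000) <= (d_lbd 3 - 1) * ln (1 - (893/2000) ^ (3 - 1))) by (apply prod_lb; lra).
    lra. }
  assert (I0 : forall x y, (893/2000) <= x -> x < y -> y <= (1393/3000) -> Phi 3 (d_lbd 3) x < Phi 3 (d_lbd 3) y).
  { apply (phi_inc_piece 3 (d_lbd 3) (893/2000) (1393/3000)); [lia | lra | lra | lra | lra | simpl; lra | simpl; lra]. }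
  assert (I1 : forall x y, (1393/3000) <= x -> x < y -> y <= (2893/6000) -> Phi 3 (d_lbd 3) x < Phi 3 (d_lbd 3) y).
  { apply (phi_inc_piece 3 (d_lbd 3) (1393/3000) (2893/6000)); [lia | lra | lra | lra | lra | simpl; lra | simpl; lra]. }
  assert (I2 : forall x y, (2893/6000) <= x -> x < y -> y <= (1/2) -> Phi 3 (d_lbd 3) x < Phi 3 (d_lbd 3) y).
  { apply (phi_inc_piece 3 (d_lbd 3) (2893/6000) (1/2)); [lia | lra | lra | lra | lra | simpl; lra | simpl; lra]. }
  assert (J0 := I0).
  assert (J1 := inc_glue (Phi 3 (d_lbd 3)) (893/2000) (1393/3000) (2893/6000) J0 I1).
  assert (J2 := inc_glue (Phi 3 (d_lbd 3)) (893/2000) (2893/6000) (1/2) J1 I2).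
  intros x Hx. destruct (Req_dec x (893/2000)) as [->|Hne]. exact HP.
  assert (Phi 3 (d_lbd 3) (893/2000) < Phi 3 (d_lbd 3) x) by (apply J2; lra). lra.
Qed.

Lemma k3_su : exists x0, aa 3 <= x0 <= 1/2 /\ x0 <= Psi 3 (d_ubd 3) x0 /\ forall x, x0 <= x <= 1/2 -> Phi 3 (d_ubd 3) x < 0.
Proof.
  pose proof k3_dl as Hdl. pose proof k3_du as Hdu. pose proof ln2_bounds as HL2.
  rewrite k3_aa. exists (1857/4000). split. lra. split.
  {
  assert (HV : - (40153626139/125000000000) <= ln (9103102/12551551) <= - (160614497047/500000000000)) by (apply (ln_inv_range (9103102/12551551) (12551551/9103102)); [lra | lra | apply (lnr_a' (12551551/9103102) 0%nat 0 (160614497047/500000000000) (40153626139/125000000000)); [simpl; lra | lra | unfold lnlo; lra | unfold lnhi, lnlo; lra]]).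
  assert (EHV : Psi_hat 3 (1857/4000) = (9103102/12551551)) by (unfold Psi_hat; simpl; field).
  rewrite <- EHV in HV.
  assert (HY : - (1006985121487/500000000000) <= ln (286/2143) <= - (2013969642973/1000000000000)) by (apply (ln_inv_range (286/2143) (2143/286)); [lra | lra | apply (lnr_b' (2143/286) 3%nat 3 (2013969642973/1000000000000) (1006985121487/500000000000)); [simpl; lra | lra | unfold lnhi, lnlo; lra | unfold lnlo; lra]]).
  assert (EHY : (1 - 2 * (1857/4000)) / (1 - (1857/4000)) = (286/2143)) by (simpl; field).
  rewrite <- EHY in HY.
  left. apply (psi_check 3 (d_ubd 3) (1857/4000) (1857/4000) (((15/2) - 1) * ((-160614497047/500000000000)))); [lia | lra | lra | lra | apply prod_ub; lra | lra].
  }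
  assert (HP : Phi 3 (d_ubd 3) (1/2) < 0).
  { rewrite Phi_repr2 by (try lia; lra).
  assert (HA : - (433217/625000) <= ln (1/2) <= - (693147/1000000)) by (apply (ln_inv_range (1/2) (2)); [lra | lra | apply (lnr_a' (2) 1%nat 1 (693147/1000000) (433217/625000)); [simpl; lra | lra | unfold lnlo; lra | unfold lnhi, lnlo; lra]]).
  assert (EHA : 1 - (1/2) = (1/2)) by (simpl; field).
  rewrite <- EHA in HA.
  assert (HB : - (287682072473/1000000000000) <= ln (3/4) <= - (287682066851/1000000000000)) by (apply (ln_inv_range (3/4) (4/3)); [lra | lra | apply (lnr_a' (4/3) 0%nat 0 (287682066851/1000000000000) (287682072473/1000000000000)); [simpl; lra | lra | unfold lnlo; lra | unfold lnhi, lnlo; lra]]).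
  assert (EHB : 1 - 2 * (1/2) ^ 3 = (3/4)) by (simpl; field).
  rewrite <- EHB in HB.
  assert (HC : - (287682072473/1000000000000) <= ln (3/4) <= - (287682066851/1000000000000)) by (apply (ln_inv_range (3/4) (4/3)); [lra | lra | apply (lnr_a' (4/3) 0%nat 0 (287682066851/1000000000000) (287682072473/1000000000000)); [simpl; lra | lra | unfold lnlo; lra | unfold lnhi, lnlo; lra]]).
  assert (EHC : 1 - (1/2) ^ (3 - 1) = (3/4)) by (simpl; field).
  rewrite <- EHC in HC.
    assert (HK : INR 3 = 3) by (simpl; lra). rewrite HK.
    assert (T1 : (4) * (-287682072473/1000000000000) <= (d_ubd 3 * (1 - / 3) - 1) * ln (1 - 2 * (1/2) ^ 3)) by (apply prod_lb; lra).
    assert (T2 : (d_ubd 3 - 1) * ln (1 - (1/2) ^ (3 - 1)) <= ((15/2) - 1) * (-287682066851/1000000000000)) by (apply prod_ub; lra).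
    lra. }
  assert (I0 : forall x y, (1857/4000) <= x -> x < y -> y <= (3857/8000) -> Phi 3 (d_ubd 3) x < Phi 3 (d_ubd 3) y).
  { apply (phi_inc_piece 3 (d_ubd 3) (1857/4000) (3857/8000)); [lia | lra | lra | lra | lra | simpl; lra | simpl; lra]. }
  assert (I1 : forall x y, (3857/8000) <= x -> x < y -> y <= (1/2) -> Phi 3 (d_ubd 3) x < Phi 3 (d_ubd 3) y).
  { apply (phi_inc_piece 3 (d_ubd 3) (3857/8000) (1/2)); [lia | lra | lra | lra | lra | simpl; lra | simpl; lra]. }
  assert (J0 := I0).
  assert (J1 := inc_glue (Phi 3 (d_ubd 3)) (1857/4000) (3857/8000) (1/2) J0 I1).
  intros x Hx. destruct (Req_dec x (1/2)) as [->|Hne]. exact HP.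
  assert (Phi 3 (d_ubd 3) x < Phi 3 (d_ubd 3) (1/2)) by (apply J1; lra). lra.
Qed.

Lemma main_k3 : Statement 3.
Proof.
  pose proof k3_dl. pose proof k3_du.
  apply (reduction_main 3); [lia | lra | lra | exact k3_hex | exact k3_dec | exact k3_sl | exact k3_su].
Qed.

Lemma k4_aa : aa 4 = (7/16).
Proof. unfold aa. simpl. lra. Qed.

Lemma k4_dl : (167/10) <= d_lbd 4 <= (167/10).
Proof. unfold d_lbd. lra. Qed.

Lemma k4_du : (693147/31250) <= d_ubd 4 <= (1732868/78125).
Proof. rewrite ubd_formula by lia. pose proof ln2_bounds. simpl. lra. Qed.

Lemma k4_hex : aa 4 < Psi 4 (d_lbd 4) (aa 4).
Proof.
  pose proof k4_dl as Hd. rewrite k4_aa.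
  assert (HV : - (47921614429/500000000000) <= ln (3410/3753) <= - (95843228857/1000000000000)) by (apply (ln_inv_range (3410/3753) (3753/3410)); [lra | lra | apply (lnr_a' (3753/3410) 0%nat 0 (95843228857/1000000000000) (47921614429/500000000000)); [simpl; lra | lra | unfold lnlo; lra | unfold lnhi, lnlo; lra]]).
  assert (EHV : Psi_hat 4 (7/16) = (3410/3753)) by (unfold Psi_hat; simpl; field).
  rewrite <- EHV in HV.
  assert (HY : - (1504077435657/1000000000000) <= ln (2/9) <= - (752038517827/500000000000)) by (apply (ln_inv_range (2/9) (9/2)); [lra | lra | apply (lnr_a' (9/2) 2%nat 2 (752038517827/500000000000) (1504077435657/1000000000000)); [simpl; lra | lra | unfold lnlo; lra | unfold lnhi, lnlo; lra]]).
  assert (EHY : (1 - 2 * (7/16)) / (1 - (7/16)) = (2/9)) by (simpl; field).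
  rewrite <- EHY in HY.
  apply (psi_check 4 (d_lbd 4) (7/16) (7/16) (((167/10) - 1) * ((-95843228857/1000000000000)))); [lia | lra | lra | lra | apply prod_ub; lra | lra].
Qed.

Lemma k4_dec : forall d, in_d_interval 4 d -> forall x y, aa 4 <= x -> x < y -> y <= 1/2 -> Psi 4 d y - y < Psi 4 d x - x.
Proof.
  intros d Hd. unfold in_d_interval in Hd. pose proof k4_dl as Hdl. rewrite k4_aa.
  assert (P0 : forall x y, (7/16) <= x -> x < y -> y <= (11/24) -> Psi 4 d y - y < Psi 4 d x - x).
  {
  assert (HV0 : - (47921614429/500000000000) <= ln (3410/3753) <= - (95843228857/1000000000000)) by (apply (ln_inv_range (3410/3753) (3753/3410)); [lra | lra | apply (lnr_a' (3753/3410) 0%nat 0 (95843228857/1000000000000) (47921614429/500000000000)); [simpl; lra | lra | unfold lnlo; lra | unfold lnhi, lnlo; lra]]).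
  assert (EHV0 : Psi_hat 4 (7/16) = (3410/3753)) by (unfold Psi_hat; simpl; field).
  rewrite <- EHV0 in HV0.
  exact (dec_piece 4 (d_lbd 4) (7/16) (11/24) (95843228857/1000000000000) (15047/10000) (1777/8000) ltac:(lia) ltac:(lra) ltac:(lra) ltac:(lra) ltac:(lra) ltac:(lra) ltac:(lra) ltac:(lra) ltac:(lra) ltac:(apply exp_neg_le; lra) ltac:(lra) ltac:(unfold Psi_hat; simpl; lra) d ltac:(lra)).
  }
  assert (P1 : forall x y, (11/24) <= x -> x < y -> y <= (23/48) -> Psi 4 d y - y < Psi 4 d x - x).
  {
  assert (HV1 : - (28163333771/250000000000) <= ln (11162/12493) <= - (56326667541/500000000000)) by (apply (ln_inv_range (11162/12493) (12493/11162)); [lra | lra | apply (lnr_a' (12493/11162) 0%nat 0 (56326667541/500000000000) (28163333771/250000000000)); [simpl; lra | lra | unfold lnlo; lra | unfold lnhi, lnlo; lra]]).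
  assert (EHV1 : Psi_hat 4 (11/24) = (11162/12493)) by (unfold Psi_hat; simpl; field).
  rewrite <- EHV1 in HV1.
  exact (dec_piece 4 (d_lbd 4) (11/24) (23/48) (56326667541/500000000000) (8843/5000) (170639/1000000) ltac:(lia) ltac:(lra) ltac:(lra) ltac:(lra) ltac:(lra) ltac:(lra) ltac:(lra) ltac:(lra) ltac:(lra) ltac:(apply exp_neg_le; lra) ltac:(lra) ltac:(unfold Psi_hat; simpl; lra) d ltac:(lra)).
  }
  assert (P2 : forall x y, (23/48) <= x -> x < y -> y <= (1/2) -> Psi 4 d y - y < Psi 4 d x - x).
  {
  assert (HV2 : - (131952031597/1000000000000) <= ln (86258/98425) <= - (131952031591/1000000000000)) by (apply (ln_inv_range (86258/98425) (98425/86258)); [lra | lra | apply (lnr_a' (98425/86258) 0%nat 0 (131952031591/1000000000000) (131952031597/1000000000000)); [simpl; lra | lra | unfold lnlo; lra | unfold lnhi, lnlo; lra]]).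
  assert (EHV2 : Psi_hat 4 (23/48) = (86258/98425)) by (unfold Psi_hat; simpl; field).
  rewrite <- EHV2 in HV2.
  exact (dec_piece 4 (d_lbd 4) (23/48) (1/2) (131952031591/1000000000000) (5179/2500) (63043/500000) ltac:(lia) ltac:(lra) ltac:(lra) ltac:(lra) ltac:(lra) ltac:(lra) ltac:(lra) ltac:(lra) ltac:(lra) ltac:(apply exp_neg_le; lra) ltac:(lra) ltac:(unfold Psi_hat; simpl; lra) d ltac:(lra)).
  }
  assert (G0 := P0).
  assert (G1 := dec_glue (fun z => Psi 4 d z - z) (7/16) (11/24) (23/48) G0 P1).
  assert (G2 := dec_glue (fun z => Psi 4 d z - z) (7/16) (23/48) (1/2) G1 P2).
  exact G2.
Qed.

Lemma k4_sl : exists x0, aa 4 <= x0 <= 1/2 /\ x0 <= Psi 4 (d_lbd 4) x0 /\ forall x, x0 <= x <= 1/2 -> Phi 4 (d_lbd 4) x > 0.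
Proof.
  pose proof k4_dl as Hdl. pose proof k4_du as Hdu. pose proof ln2_bounds as HL2.
  exists (aa 4). split. pose proof (aa_bounds 4 ltac:(lia)); lra. split.
  { pose proof k4_hex. pose proof (aa_bounds 4 ltac:(lia)). pose proof (Psi_mono_d 4 (d_lbd 4) (d_lbd 4) (aa 4) ltac:(lia) ltac:(lra) ltac:(lra) ltac:(lra)). lra. }
  rewrite k4_aa.
  assert (HP : Phi 4 (d_lbd 4) (7/16) > 0).
  { rewrite Phi_repr2 by (try lia; lra).
  assert (HA : - (287682082173/500000000000) <= ln (9/16) <= - (575363964343/1000000000000)) by (apply (ln_inv_range (9/16) (16/9)); [lra | lra | apply (lnr_b' (16/9) 1%nat 1 (575363964343/1000000000000) (287682082173/500000000000)); [simpl; lra | lra | unfold lnhi, lnlo; lra | unfold lnlo; lra]]).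
  assert (EHA : 1 - (7/16) = (9/16)) by (simpl; field).
  rewrite <- EHA in HA.
  assert (HB : - (19023984233/250000000000) <= ln (30367/32768) <= - (76095936931/1000000000000)) by (apply (ln_inv_range (30367/32768) (32768/30367)); [lra | lra | apply (lnr_a' (32768/30367) 0%nat 0 (76095936931/1000000000000) (19023984233/250000000000)); [simpl; lra | lra | unfold lnlo; lra | unfold lnhi, lnlo; lra]]).
  assert (EHB : 1 - 2 * (7/16) ^ 4 = (30367/32768)) by (simpl; field).
  rewrite <- EHB in HB.
  assert (HC : - (17491073517/200000000000) <= ln (3753/4096) <= - (2732980237/31250000000)) by (apply (ln_inv_range (3753/4096) (4096/3753)); [lra | lra | apply (lnr_a' (4096/3753) 0%nat 0 (2732980237/31250000000) (17491073517/200000000000)); [simpl; lra | lra | unfold lnlo; lra | unfold lnhi, lnlo; lra]]).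
  assert (EHC : 1 - (7/16) ^ (4 - 1) = (3753/4096)) by (simpl; field).
  rewrite <- EHC in HC.
    assert (HK : INR 4 = 4) by (simpl; lra). rewrite HK.
    assert (T1 : (d_lbd 4 * (1 - / 4) - 1) * ln (1 - 2 * (7/16) ^ 4) <= (461/40) * (-76095936931/1000000000000)) by (apply prod_ub; lra).
    assert (T2 : ((167/10) - 1) * (-17491073517/200000000000) <= (d_lbd 4 - 1) * ln (1 - (7/16) ^ (4 - 1))) by (apply prod_lb; lra).
    lra. }
  assert (I0 : forall x y, (7/16) <= x -> x < y -> y <= (85/192) -> Phi 4 (d_lbd 4) x < Phi 4 (d_lbd 4) y).
  { apply (phi_inc_piece 4 (d_lbd 4) (7/16) (85/192)); [lia | lra | lra | lra | lra | simpl; lra | simpl; lra]. }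
  assert (I1 : forall x y, (85/192) <= x -> x < y -> y <= (43/96) -> Phi 4 (d_lbd 4) x < Phi 4 (d_lbd 4) y).
  { apply (phi_inc_piece 4 (d_lbd 4) (85/192) (43/96)); [lia | lra | lra | lra | lra | simpl; lra | simpl; lra]. }
  assert (I2 : forall x y, (43/96) <= x -> x < y -> y <= (29/64) -> Phi 4 (d_lbd 4) x < Phi 4 (d_lbd 4) y).
  { apply (phi_inc_piece 4 (d_lbd 4) (43/96) (29/64)); [lia | lra | lra | lra | lra | simpl; lra | simpl; lra]. }
  assert (I3 : forall x y, (29/64) <= x -> x < y -> y <= (11/24) -> Phi 4 (d_lbd 4) x < Phi 4 (d_lbd 4) y).
  { apply (phi_inc_piece 4 (d_lbd 4) (29/64) (11/24)); [lia | lra | lra | lra | lra | simpl; lra | simpl; lra]. }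
  assert (I4 : forall x y, (11/24) <= x -> x < y -> y <= (89/192) -> Phi 4 (d_lbd 4) x < Phi 4 (d_lbd 4) y).
  { apply (phi_inc_piece 4 (d_lbd 4) (11/24) (89/192)); [lia | lra | lra | lra | lra | simpl; lra | simpl; lra]. }
  assert (I5 : forall x y, (89/192) <= x -> x < y -> y <= (15/32) -> Phi 4 (d_lbd 4) x < Phi 4 (d_lbd 4) y).
  { apply (phi_inc_piece 4 (d_lbd 4) (89/192) (15/32)); [lia | lra | lra | lra | lra | simpl; lra | simpl; lra]. }
  assert (I6 : forall x y, (15/32) <= x -> x < y -> y <= (91/192) -> Phi 4 (d_lbd 4) x < Phi 4 (d_lbd 4) y).
  { apply (phi_inc_piece 4 (d_lbd 4) (15/32) (91/192)); [lia | lra | lra | lra | lra | simpl; lra | simpl; lra]. }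
  assert (I7 : forall x y, (91/192) <= x -> x < y -> y <= (23/48) -> Phi 4 (d_lbd 4) x < Phi 4 (d_lbd 4) y).
  { apply (phi_inc_piece 4 (d_lbd 4) (91/192) (23/48)); [lia | lra | lra | lra | lra | simpl; lra | simpl; lra]. }
  assert (I8 : forall x y, (23/48) <= x -> x < y -> y <= (31/64) -> Phi 4 (d_lbd 4) x < Phi 4 (d_lbd 4) y).
  { apply (phi_inc_piece 4 (d_lbd 4) (23/48) (31/64)); [lia | lra | lra | lra | lra | simpl; lra | simpl; lra]. }
  assert (I9 : forall x y, (31/64) <= x -> x < y -> y <= (47/96) -> Phi 4 (d_lbd 4) x < Phi 4 (d_lbd 4) y).
  { apply (phi_inc_piece 4 (d_lbd 4) (31/64) (47/96)); [lia | lra | lra | lra | lra | simpl; lra | simpl; lra]. }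
  assert (I10 : forall x y, (47/96) <= x -> x < y -> y <= (95/192) -> Phi 4 (d_lbd 4) x < Phi 4 (d_lbd 4) y).
  { apply (phi_inc_piece 4 (d_lbd 4) (47/96) (95/192)); [lia | lra | lra | lra | lra | simpl; lra | simpl; lra]. }
  assert (I11 : forall x y, (95/192) <= x -> x < y -> y <= (1/2) -> Phi 4 (d_lbd 4) x < Phi 4 (d_lbd 4) y).
  { apply (phi_inc_piece 4 (d_lbd 4) (95/192) (1/2)); [lia | lra | lra | lra | lra | simpl; lra | simpl; lra]. }
  assert (J0 := I0).
  assert (J1 := inc_glue (Phi 4 (d_lbd 4)) (7/16) (85/192) (43/96) J0 I1).
  assert (J2 := inc_glue (Phi 4 (d_lbd 4)) (7/16) (43/96) (29/64) J1 I2).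
  assert (J3 := inc_glue (Phi 4 (d_lbd 4)) (7/16) (29/64) (11/24) J2 I3).
  assert (J4 := inc_glue (Phi 4 (d_lbd 4)) (7/16) (11/24) (89/192) J3 I4).
  assert (J5 := inc_glue (Phi 4 (d_lbd 4)) (7/16) (89/192) (15/32) J4 I5).
  assert (J6 := inc_glue (Phi 4 (d_lbd 4)) (7/16) (15/32) (91/192) J5 I6).
  assert (J7 := inc_glue (Phi 4 (d_lbd 4)) (7/16) (91/192) (23/48) J6 I7).
  assert (J8 := inc_glue (Phi 4 (d_lbd 4)) (7/16) (23/48) (31/64) J7 I8).
  assert (J9 := inc_glue (Phi 4 (d_lbd 4)) (7/16) (31/64) (47/96) J8 I9).
  assert (J10 := inc_glue (Phi 4 (d_lbd 4)) (7/16) (47/96) (95/192) J9 I10).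
  assert (J11 := inc_glue (Phi 4 (d_lbd 4)) (7/16) (95/192) (1/2) J10 I11).
  intros x Hx. destruct (Req_dec x (7/16)) as [->|Hne]. exact HP.
  assert (Phi 4 (d_lbd 4) (7/16) < Phi 4 (d_lbd 4) x) by (apply J11; lra). lra.
Qed.

Lemma k4_su : exists x0, aa 4 <= x0 <= 1/2 /\ x0 <= Psi 4 (d_ubd 4) x0 /\ forall x, x0 <= x <= 1/2 -> Phi 4 (d_ubd 4) x < 0.
Proof.
  pose proof k4_dl as Hdl. pose proof k4_du as Hdu. pose proof ln2_bounds as HL2.
  rewrite k4_aa. exists (24081/50000). split. lra. split.
  {
  assert (HV : - (26881323071/200000000000) <= ln (97071118153118/111035559076559) <= - (33601653837/250000000000)) by (apply (ln_inv_range (97071118153118/111035559076559) (111035559076559/97071118153118)); [lra | lra | apply (lnr_a' (111035559076559/97071118153118) 0%nat 0 (33601653837/250000000000) (26881323071/200000000000)); [simpl; lra | lra | unfold lnlo; lra | unfold lnhi, lnlo; lra]]).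
  assert (EHV : Psi_hat 4 (24081/50000) = (97071118153118/111035559076559)) by (unfold Psi_hat; simpl; field).
  rewrite <- EHV in HV.
  assert (HY : - (661574586081/250000000000) <= ln (1838/25919) <= - (2646297544319/1000000000000)) by (apply (ln_inv_range (1838/25919) (25919/1838)); [lra | lra | apply (lnr_b' (25919/1838) 4%nat 4 (2646297544319/1000000000000) (661574586081/250000000000)); [simpl; lra | lra | unfold lnhi, lnlo; lra | unfold lnlo; lra]]).
  assert (EHY : (1 - 2 * (24081/50000)) / (1 - (24081/50000)) = (1838/25919)) by (simpl; field).
  rewrite <- EHY in HY.
  left. apply (psi_check 4 (d_ubd 4) (24081/50000) (24081/50000) (((693147/31250) - 1) * ((-33601653837/250000000000)))); [lia | lra | lra | lra | apply prod_ub; lra | lra].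
  }
  assert (HP : Phi 4 (d_ubd 4) (1/2) < 0).
  { rewrite Phi_repr2 by (try lia; lra).
  assert (HA : - (433217/625000) <= ln (1/2) <= - (693147/1000000)) by (apply (ln_inv_range (1/2) (2)); [lra | lra | apply (lnr_a' (2) 1%nat 1 (693147/1000000) (433217/625000)); [simpl; lra | lra | unfold lnlo; lra | unfold lnhi, lnlo; lra]]).
  assert (EHA : 1 - (1/2) = (1/2)) by (simpl; field).
  rewrite <- EHA in HA.
  assert (HB : - (1068251141/8000000000) <= ln (7/8) <= - (66765696309/500000000000)) by (apply (ln_inv_range (7/8) (8/7)); [lra | lra | apply (lnr_a' (8/7) 0%nat 0 (66765696309/500000000000) (1068251141/8000000000)); [simpl; lra | lra | unfold lnlo; lra | unfold lnhi, lnlo; lra]]).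
  assert (EHB : 1 - 2 * (1/2) ^ 4 = (7/8)) by (simpl; field).
  rewrite <- EHB in HB.
  assert (HC : - (1068251141/8000000000) <= ln (7/8) <= - (66765696309/500000000000)) by (apply (ln_inv_range (7/8) (8/7)); [lra | lra | apply (lnr_a' (8/7) 0%nat 0 (66765696309/500000000000) (1068251141/8000000000)); [simpl; lra | lra | unfold lnlo; lra | unfold lnhi, lnlo; lra]]).
  assert (EHC : 1 - (1/2) ^ (4 - 1) = (7/8)) by (simpl; field).
  rewrite <- EHC in HC.
    assert (HK : INR 4 = 4) by (simpl; lra). rewrite HK.
    assert (T1 : (1221526/78125) * (-1068251141/8000000000) <= (d_ubd 4 * (1 - / 4) - 1) * ln (1 - 2 * (1/2) ^ 4)) by (apply prod_lb; lra).
    assert (T2 : (d_ubd 4 - 1) * ln (1 - (1/2) ^ (4 - 1)) <= ((693147/31250) - 1) * (-66765696309/500000000000)) by (apply prod_ub; lra).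
    lra. }
  assert (I0 : forall x y, (24081/50000) <= x -> x < y -> y <= (49081/100000) -> Phi 4 (d_ubd 4) x < Phi 4 (d_ubd 4) y).
  { apply (phi_inc_piece 4 (d_ubd 4) (24081/50000) (49081/100000)); [lia | lra | lra | lra | lra | simpl; lra | simpl; lra]. }
  assert (I1 : forall x y, (49081/100000) <= x -> x < y -> y <= (1/2) -> Phi 4 (d_ubd 4) x < Phi 4 (d_ubd 4) y).
  { apply (phi_inc_piece 4 (d_ubd 4) (49081/100000) (1/2)); [lia | lra | lra | lra | lra | simpl; lra | simpl; lra]. }
  assert (J0 := I0).
  assert (J1 := inc_glue (Phi 4 (d_ubd 4)) (24081/50000) (49081/100000) (1/2) J0 I1).
  intros x Hx. destruct (Req_dec x (1/2)) as [->|Hne]. exact HP.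
  assert (Phi 4 (d_ubd 4) x < Phi 4 (d_ubd 4) (1/2)) by (apply J1; lra). lra.
Qed.

Lemma main_k4 : Statement 4.
Proof.
  pose proof k4_dl. pose proof k4_du.
  apply (reduction_main 4); [lia | lra | lra | exact k4_hex | exact k4_dec | exact k4_sl | exact k4_su].
Qed.

Lemma k5_aa : aa 5 = (15/32).
Proof. unfold aa. simpl. lra. Qed.

Lemma k5_dl : (4852029/100000) <= d_lbd 5 <= (3032519/62500).
Proof. rewrite lbd_formula by lia. pose proof ln2_bounds. simpl. lra. Qed.

Lemma k5_du : (693147/12500) <= d_ubd 5 <= (866434/15625).
Proof. rewrite ubd_formula by lia. pose proof ln2_bounds. simpl. lra. Qed.

Lemma k5_hex : aa 5 < Psi 5 (d_lbd 5) (aa 5).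
Proof.
  pose proof k5_dl as Hd. rewrite k5_aa.
  assert (HV : - (52060897979/1000000000000) <= ln (947326/997951) <= - (26030448989/500000000000)) by (apply (ln_inv_range (947326/997951) (997951/947326)); [lra | lra | apply (lnr_a' (997951/947326) 0%nat 0 (26030448989/500000000000) (52060897979/1000000000000)); [simpl; lra | lra | unfold lnlo; lra | unfold lnhi, lnlo; lra]]).
  assert (EHV : Psi_hat 5 (15/32) = (947326/997951)) by (unfold Psi_hat; simpl; field).
  rewrite <- EHV in HV.
  assert (HY : - (2140066221817/1000000000000) <= ln (2/17) <= - (267508202727/125000000000)) by (apply (ln_inv_range (2/17) (17/2)); [lra | lra | apply (lnr_a' (17/2) 3%nat 3 (267508202727/125000000000) (2140066221817/1000000000000)); [simpl; lra | lra | unfold lnlo; lra | unfold lnhi, lnlo; lra]]).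
  assert (EHY : (1 - 2 * (15/32)) / (1 - (15/32)) = (2/17)) by (simpl; field).
  rewrite <- EHY in HY.
  apply (psi_check 5 (d_lbd 5) (15/32) (15/32) (((4852029/100000) - 1) * ((-26030448989/500000000000)))); [lia | lra | lra | lra | apply prod_ub; lra | lra].
Qed.

Lemma k5_dec : forall d, in_d_interval 5 d -> forall x y, aa 5 <= x -> x < y -> y <= 1/2 -> Psi 5 d y - y < Psi 5 d x - x.
Proof.
  intros d Hd. unfold in_d_interval in Hd. pose proof k5_dl as Hdl. rewrite k5_aa.
  assert (P0 : forall x y, (15/32) <= x -> x < y -> y <= (1/2) -> Psi 5 d y - y < Psi 5 d x - x).
  {
  assert (HV0 : - (52060897979/1000000000000) <= ln (947326/997951) <= - (26030448989/500000000000)) by (apply (ln_inv_range (947326/997951) (997951/947326)); [lra | lra | apply (lnr_a' (997951/947326) 0%nat 0 (26030448989/500000000000) (52060897979/1000000000000)); [simpl; lra | lra | unfold lnlo; lra | unfold lnhi, lnlo; lra]]).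
  assert (EHV0 : Psi_hat 5 (15/32) = (947326/997951)) by (unfold Psi_hat; simpl; field).
  rewrite <- EHV0 in HV0.
  exact (dec_piece 5 (d_lbd 5) (15/32) (1/2) (26030448989/500000000000) (24739/10000) (84409/1000000) ltac:(lia) ltac:(lra) ltac:(lra) ltac:(lra) ltac:(lra) ltac:(lra) ltac:(lra) ltac:(lra) ltac:(lra) ltac:(apply exp_neg_le; lra) ltac:(lra) ltac:(unfold Psi_hat; simpl; lra) d ltac:(lra)).
  }
  assert (G0 := P0).
  exact G0.
Qed.

Lemma k5_sl : exists x0, aa 5 <= x0 <= 1/2 /\ x0 <= Psi 5 (d_lbd 5) x0 /\ forall x, x0 <= x <= 1/2 -> Phi 5 (d_lbd 5) x > 0.
Proof.
  pose proof k5_dl as Hdl. pose proof k5_du as Hdu. pose proof ln2_bounds as HL2.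
  rewrite k5_aa. exists (97/200). split. lra. split.
  {
  assert (HV : - (60356998543/1000000000000) <= ln (1422941438/1511470719) <= - (30178499271/500000000000)) by (apply (ln_inv_range (1422941438/1511470719) (1511470719/1422941438)); [lra | lra | apply (lnr_a' (1511470719/1422941438) 0%nat 0 (30178499271/500000000000) (60356998543/1000000000000)); [simpl; lra | lra | unfold lnlo; lra | unfold lnhi, lnlo; lra]]).
  assert (EHV : Psi_hat 5 (97/200) = (1422941438/1511470719)) by (unfold Psi_hat; simpl; field).
  rewrite <- EHV in HV.
  assert (HY : - (1421484798381/500000000000) <= ln (6/103) <= - (2842968796761/1000000000000)) by (apply (ln_inv_range (6/103) (103/6)); [lra | lra | apply (lnr_a' (103/6) 4%nat 4 (2842968796761/1000000000000) (1421484798381/500000000000)); [simpl; lra | lra | unfold lnlo; lra | unfold lnhi, lnlo; lra]]).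
  assert (EHY : (1 - 2 * (97/200)) / (1 - (97/200)) = (6/103)) by (simpl; field).
  rewrite <- EHY in HY.
  left. apply (psi_check 5 (d_lbd 5) (97/200) (97/200) (((4852029/100000) - 1) * ((-30178499271/500000000000)))); [lia | lra | lra | lra | apply prod_ub; lra | lra].
  }
  assert (HP : Phi 5 (d_lbd 5) (97/200) > 0).
  { rewrite Phi_repr2 by (try lia; lra).
  assert (HA : - (663588397759/1000000000000) <= ln (103/200) <= - (331794098879/500000000000)) by (apply (ln_inv_range (103/200) (200/103)); [lra | lra | apply (lnr_b' (200/103) 1%nat 1 (331794098879/500000000000) (663588397759/1000000000000)); [simpl; lra | lra | unfold lnhi, lnlo; lra | unfold lnlo; lra]]).
  assert (EHA : 1 - (97/200) = (103/200)) by (simpl; field).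
  rewrite <- EHA in HA.
  assert (HB : - (55164859873/1000000000000) <= ln (151412659743/160000000000) <= - (1723901871/31250000000)) by (apply (ln_inv_range (151412659743/160000000000) (160000000000/151412659743)); [lra | lra | apply (lnr_a' (160000000000/151412659743) 0%nat 0 (1723901871/31250000000) (55164859873/1000000000000)); [simpl; lra | lra | unfold lnlo; lra | unfold lnhi, lnlo; lra]]).
  assert (EHB : 1 - 2 * (97/200) ^ 5 = (151412659743/160000000000)) by (simpl; field).
  rewrite <- EHB in HB.
  assert (HC : - (56920466343/1000000000000) <= ln (1511470719/1600000000) <= - (28460233171/500000000000)) by (apply (ln_inv_range (1511470719/1600000000) (1600000000/1511470719)); [lra | lra | apply (lnr_a' (1600000000/1511470719) 0%nat 0 (28460233171/500000000000) (56920466343/1000000000000)); [simpl; lra | lra | unfold lnlo; lra | unfold lnhi, lnlo; lra]]).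
  assert (EHC : 1 - (97/200) ^ (5 - 1) = (1511470719/1600000000)) by (simpl; field).
  rewrite <- EHC in HC.
    assert (HK : INR 5 = 5) by (simpl; lra). rewrite HK.
    assert (T1 : (d_lbd 5 * (1 - / 5) - 1) * ln (1 - 2 * (97/200) ^ 5) <= (4727029/125000) * (-1723901871/31250000000)) by (apply prod_ub; lra).
    assert (T2 : ((3032519/62500) - 1) * (-56920466343/1000000000000) <= (d_lbd 5 - 1) * ln (1 - (97/200) ^ (5 - 1))) by (apply prod_lb; lra).
    lra. }
  assert (I0 : forall x y, (97/200) <= x -> x < y -> y <= (49/100) -> Phi 5 (d_lbd 5) x < Phi 5 (d_lbd 5) y).
  { apply (phi_inc_piece 5 (d_lbd 5) (97/200) (49/100)); [lia | lra | lra | lra | lra | simpl; lra | simpl; lra]. }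
  assert (I1 : forall x y, (49/100) <= x -> x < y -> y <= (99/200) -> Phi 5 (d_lbd 5) x < Phi 5 (d_lbd 5) y).
  { apply (phi_inc_piece 5 (d_lbd 5) (49/100) (99/200)); [lia | lra | lra | lra | lra | simpl; lra | simpl; lra]. }
  assert (I2 : forall x y, (99/200) <= x -> x < y -> y <= (1/2) -> Phi 5 (d_lbd 5) x < Phi 5 (d_lbd 5) y).
  { apply (phi_inc_piece 5 (d_lbd 5) (99/200) (1/2)); [lia | lra | lra | lra | lra | simpl; lra | simpl; lra]. }
  assert (J0 := I0).
  assert (J1 := inc_glue (Phi 5 (d_lbd 5)) (97/200) (49/100) (99/200) J0 I1).
  assert (J2 := inc_glue (Phi 5 (d_lbd 5)) (97/200) (99/200) (1/2) J1 I2).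
  intros x Hx. destruct (Req_dec x (97/200)) as [->|Hne]. exact HP.
  assert (Phi 5 (d_lbd 5) (97/200) < Phi 5 (d_lbd 5) x) by (apply J2; lra). lra.
Qed.

Lemma k5_su : exists x0, aa 5 <= x0 <= 1/2 /\ x0 <= Psi 5 (d_ubd 5) x0 /\ forall x, x0 <= x <= 1/2 -> Phi 5 (d_ubd 5) x < 0.
Proof.
  pose proof k5_dl as Hdl. pose proof k5_du as Hdu. pose proof ln2_bounds as HL2.
  rewrite k5_aa. exists (97/200). split. lra. split.
  {
  assert (HV : - (60356998543/1000000000000) <= ln (1422941438/1511470719) <= - (30178499271/500000000000)) by (apply (ln_inv_range (1422941438/1511470719) (1511470719/1422941438)); [lra | lra | apply (lnr_a' (1511470719/1422941438) 0%nat 0 (30178499271/500000000000) (60356998543/1000000000000)); [simpl; lra | lra | unfold lnlo; lra | unfold lnhi, lnlo; lra]]).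
  assert (EHV : Psi_hat 5 (97/200) = (1422941438/1511470719)) by (unfold Psi_hat; simpl; field).
  rewrite <- EHV in HV.
  assert (HY : - (1421484798381/500000000000) <= ln (6/103) <= - (2842968796761/1000000000000)) by (apply (ln_inv_range (6/103) (103/6)); [lra | lra | apply (lnr_a' (103/6) 4%nat 4 (2842968796761/1000000000000) (1421484798381/500000000000)); [simpl; lra | lra | unfold lnlo; lra | unfold lnhi, lnlo; lra]]).
  assert (EHY : (1 - 2 * (97/200)) / (1 - (97/200)) = (6/103)) by (simpl; field).
  rewrite <- EHY in HY.
  left. apply (psi_check 5 (d_ubd 5) (97/200) (97/200) (((693147/12500) - 1) * ((-30178499271/500000000000)))); [lia | lra | lra | lra | apply prod_ub; lra | lra].
  }
  assert (HP : Phi 5 (d_ubd 5) (1/2) < 0).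
  { rewrite Phi_repr2 by (try lia; lra).
  assert (HA : - (433217/625000) <= ln (1/2) <= - (693147/1000000)) by (apply (ln_inv_range (1/2) (2)); [lra | lra | apply (lnr_a' (2) 1%nat 1 (693147/1000000) (433217/625000)); [simpl; lra | lra | unfold lnlo; lra | unfold lnhi, lnlo; lra]]).
  assert (EHA : 1 - (1/2) = (1/2)) by (simpl; field).
  rewrite <- EHA in HA.
  assert (HB : - (32269260569/500000000000) <= ln (15/16) <= - (64538521137/1000000000000)) by (apply (ln_inv_range (15/16) (16/15)); [lra | lra | apply (lnr_a' (16/15) 0%nat 0 (64538521137/1000000000000) (32269260569/500000000000)); [simpl; lra | lra | unfold lnlo; lra | unfold lnhi, lnlo; lra]]).
  assert (EHB : 1 - 2 * (1/2) ^ 5 = (15/16)) by (simpl; field).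
  rewrite <- EHB in HB.
  assert (HC : - (32269260569/500000000000) <= ln (15/16) <= - (64538521137/1000000000000)) by (apply (ln_inv_range (15/16) (16/15)); [lra | lra | apply (lnr_a' (16/15) 0%nat 0 (64538521137/1000000000000) (32269260569/500000000000)); [simpl; lra | lra | unfold lnlo; lra | unfold lnhi, lnlo; lra]]).
  assert (EHC : 1 - (1/2) ^ (5 - 1) = (15/16)) by (simpl; field).
  rewrite <- EHC in HC.
    assert (HK : INR 5 = 5) by (simpl; lra). rewrite HK.
    assert (T1 : (3387611/78125) * (-32269260569/500000000000) <= (d_ubd 5 * (1 - / 5) - 1) * ln (1 - 2 * (1/2) ^ 5)) by (apply prod_lb; lra).
    assert (T2 : (d_ubd 5 - 1) * ln (1 - (1/2) ^ (5 - 1)) <= ((693147/12500) - 1) * (-64538521137/1000000000000)) by (apply prod_ub; lra).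
    lra. }
  assert (I0 : forall x y, (97/200) <= x -> x < y -> y <= (49/100) -> Phi 5 (d_ubd 5) x < Phi 5 (d_ubd 5) y).
  { apply (phi_inc_piece 5 (d_ubd 5) (97/200) (49/100)); [lia | lra | lra | lra | lra | simpl; lra | simpl; lra]. }
  assert (I1 : forall x y, (49/100) <= x -> x < y -> y <= (99/200) -> Phi 5 (d_ubd 5) x < Phi 5 (d_ubd 5) y).
  { apply (phi_inc_piece 5 (d_ubd 5) (49/100) (99/200)); [lia | lra | lra | lra | lra | simpl; lra | simpl; lra]. }
  assert (I2 : forall x y, (99/200) <= x -> x < y -> y <= (1/2) -> Phi 5 (d_ubd 5) x < Phi 5 (d_ubd 5) y).
  { apply (phi_inc_piece 5 (d_ubd 5) (99/200) (1/2)); [lia | lra | lra | lra | lra | simpl; lra | simpl; lra]. }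
  assert (J0 := I0).
  assert (J1 := inc_glue (Phi 5 (d_ubd 5)) (97/200) (49/100) (99/200) J0 I1).
  assert (J2 := inc_glue (Phi 5 (d_ubd 5)) (97/200) (99/200) (1/2) J1 I2).
  intros x Hx. destruct (Req_dec x (1/2)) as [->|Hne]. exact HP.
  assert (Phi 5 (d_ubd 5) x < Phi 5 (d_ubd 5) (1/2)) by (apply J2; lra). lra.
Qed.

Lemma main_k5 : Statement 5.
Proof.
  pose proof k5_dl. pose proof k5_du.
  apply (reduction_main 5); [lia | lra | lra | exact k5_hex | exact k5_dec | exact k5_sl | exact k5_su].
Qed.

Theorem proposition1p7 (k : nat) (hk : (3 <= k)%nat) :
  (forall d : R, in_d_interval k d ->
     exists! x : R, in_root_interval k x /\ Psi k d x = x) /\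
  (forall xs : R -> R,
     (forall d : R, in_d_interval k d ->
        in_root_interval k (xs d) /\ Psi k d (xs d) = xs d) ->
     (forall d0 : R, in_d_interval k d0 ->
        limit1_in (fun d => Phi k d (xs d)) (in_d_interval k)
                  (Phi k d0 (xs d0)) d0) /\
     Phi k (d_lbd k) (xs (d_lbd k)) > 0 /\
     Phi k (d_ubd k) (xs (d_ubd k)) < 0).
Proof.
  change (Statement k).
  assert ((6 <= k)%nat \/ (k < 6)%nat) as [H|H] by lia.
  - apply main_ge6; auto.
  - assert (k = 3 \/ k = 4 \/ k = 5)%nat as Hk by lia.
    destruct Hk as [ -> | [ -> | -> ] ].
    + exact main_k3.
    + exact main_k4.
    + exact main_k5.
Qed.
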